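(* Let $0<\alpha<1$, $T>0$, $N_T$ a positive integer, $\Delta t=T/N_T$, $t_k=k\Delta t$, and let $\tilde s_i>0,\ \tilde w_i>0$ ($i=1,\dots,N_A$) satisfy $\left|t^{-\alpha}-\sum_{i=1}^{N_A}\tilde w_ie^{-\tilde s_it}\right|\le\varepsilon_0$ for all $t\in[\Delta t,T]$. Let $1\le n\le N_T$, $u\in C^2[0,t_n]$, $u^k=u(t_k)$, and $$R:={}^C_0D_t^\alpha u(t)\big|_{t=t_n}-\mathbb{D}_t^\alpha u^n.$$ Then $$|R|\le\frac{\Delta t^{2-\alpha}}{\Gamma(2-\alpha)}\Big(\frac{1-\alpha}{12}+\frac{2^{2-\alpha}}{2-\alpha}-(1+2^{-\alpha})\Big)\max_{0\le t\le t_n}|u''(t)|+\frac{\varepsilon_0\,t_{n-1}}{\Gamma(1-\alpha)}\max_{0\le t\le t_{n-1}}|u'(t)|.$$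
   Context: The Caputo derivative is ${}^C_0D_t^\alpha u(t)=\frac{1}{\Gamma(1-\alpha)}\int_0^t\frac{u'(\tau)}{(t-\tau)^\alpha}d\tau$. For a sequence $(u^k)_{k\ge0}$, the FIDR operator is $$\mathbb{D}_t^\alpha u^n=\frac{u^n-u^{n-1}}{\Delta t^\alpha\Gamma(2-\alpha)}+\frac{1}{\Gamma(1-\alpha)}\sum_{i=1}^{N_A}\tilde w_i\tilde\Psi_i^n,$$ where $\tilde\Psi_i^1=0$ and, for $n\ge2$, $\tilde\Psi_i^n=e^{-\tilde s_i\Delta t}\tilde\Psi_i^{n-1}+\frac{(u^{n-1}-u^{n-2})(1-e^{-\tilde s_i\Delta t})e^{-\tilde s_i\Delta t}}{\tilde s_i\Delta t}$. *)

(* Defs.v *)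
From Stdlib Require Import Reals.
From Coquelicot Require Import Coquelicot.
Open Scope R_scope.

Definition Gamma (x : R) : R :=
  RInt_gen (fun t => Rpower t (x - 1) * exp (- t))
           (at_right 0) (Rbar_locally p_infty).

Definition caputo (alpha : R) (u : R -> R) (t : R) : R :=
  / Gamma (1 - alpha) *
  RInt_gen (fun tau => Derive u tau * Rpower (t - tau) (- alpha))
           (at_point 0) (at_left t).

(* Psi~_i^n for a node s, step dt and sequence U; Psi^1 = 0 and for n >= 2
   Psi^n = e^{-s dt} Psi^{n-1}
           + (U^{n-1} - U^{n-2}) (1 - e^{-s dt}) e^{-s dt} / (s dt).
   (The value at n = 0 is irrelevant and set to 0.) *)
Fixpoint fidr_psi (s dt : R) (U : nat -> R) (n : nat) : R :=
  match n with
  | O => 0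
  | S O => 0
  | S ((S m) as k) =>
      exp (- (s * dt)) * fidr_psi s dt U k
      + (U k - U m) * (1 - exp (- (s * dt))) * exp (- (s * dt)) / (s * dt)
  end.

Definition fidr (alpha dt : R) (NA : nat) (s w : nat -> R)
  (U : nat -> R) (n : nat) : R :=
  (U n - U (n - 1)%nat) / (Rpower dt alpha * Gamma (2 - alpha))
  + / Gamma (1 - alpha) * sum_n_m (fun i => w i * fidr_psi (s i) dt U n) 1 NA.

Definition is_max_on (f : R -> R) (a b M : R) : Prop :=
  (forall t, a <= t <= b -> f t <= M) /\ (exists t, a <= t <= b /\ f t = M).

(* Main.v *)
Require Import Defs.
From Stdlib Require Import Reals Lra Lia Psatz.
From Coquelicot Require Import Coquelicot.
Open Scope R_scope.

Lemma ballR (x e y : R) : ball x e y <-> Rabs (y - x) < e.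
Proof. split; intro H; exact H. Qed.

Lemma rp_pos x y : 0 < Rpower x y.
Proof. unfold Rpower; apply exp_pos. Qed.

Lemma scalR (a b : R) : scal a b = a * b.
Proof. reflexivity. Qed.

Lemma der_rp (c y t : R) : t < c ->
  is_derive (fun s => Rpower (c - s) y) t (- (y * Rpower (c - t) (y - 1))).
Proof.
  intro Ht.
  assert (H1 : is_derive (fun x => Rpower x y) (c - t) (y * Rpower (c - t) (y - 1))).
  { apply is_derive_Reals. apply derivable_pt_lim_power. lra. }
  assert (H2 : is_derive (fun s => c - s) t (-1)).
  { auto_derive; auto; ring. }
  pose proof (is_derive_comp _ _ _ _ _ H1 H2) as H.
  rewrite scalR in H. replace (- (y * Rpower (c - t) (y - 1))) with (-1 * (y * Rpower (c - t) (y - 1))) by ring.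
  exact H.
Qed.

Lemma rp_lim0 (y : R) : 0 < y -> filterlim (fun x => Rpower x y) (at_right 0) (locally 0).
Proof.
  intro Hy. apply filterlim_locally. intro eps.
  assert (Hd : 0 < Rpower eps (/ y)) by apply rp_pos.
  exists (mkposreal _ Hd). intros x Hx Hx0. apply ballR. apply ballR in Hx. simpl in Hx.
  change (Rabs (x - 0) < Rpower eps (/ y)) in Hx.
  rewrite Rminus_0_r. rewrite Rminus_0_r in Hx. rewrite Rabs_pos_eq in Hx by lra.
  rewrite Rabs_pos_eq by (left; apply rp_pos).
  apply Rlt_le_trans with (Rpower (Rpower eps (/ y)) y).
  apply Rlt_Rpower_l; lra.
  rewrite Rpower_mult. rewrite Rinv_l by lra. rewrite Rpower_1 by (apply cond_pos). lra.
Qed.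

Lemma rp_limL (c y : R) : 0 < y -> filterlim (fun b => Rpower (c - b) y) (at_left c) (locally 0).
Proof.
  intro Hy. apply (filterlim_comp _ _ _ (fun b => c - b) (fun x => Rpower x y) (at_left c) (at_right 0)); [ | apply rp_lim0; exact Hy].
  intros P [d Hd]. exists d. intros x Hx Hxc. apply Hd.
  change (Rabs (x - c) < d) in Hx. change (Rabs (c - x - 0) < d). rewrite Rabs_minus_sym in Hx. rewrite Rminus_0_r.
  replace (c - x) with (c - x) by ring. exact Hx. lra.
Qed.

Lemma cauchy_lim (F : (R -> Prop) -> Prop) (FF : ProperFilter F) (I : R -> R) :
  (forall eps : posreal, exists P, F P /\ forall x y, P x -> P y -> Rabs (I x - I y) < eps) ->
  exists l, filterlim I F (locally l).
Proof.
  intro H. set (G := filtermap I F).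
  assert (PG : ProperFilter G) by (apply filtermap_proper_filter; auto).
  assert (CG : cauchy G).
  { intro eps. destruct (H eps) as [P [HP HP2]]. destruct (filter_ex P HP) as [x0 Hx0].
    exists (I x0). unfold G, filtermap. apply filter_imp with P; auto. intros y Hy.
    apply ballR. apply HP2; auto. }
  exists (lim G). apply filterlim_locally. intro eps. apply (complete_cauchy G PG CG eps).
Qed.

Lemma ex_lim_cmp (F : (R -> Prop) -> Prop) (FF : ProperFilter F) (If Ig : R -> R) (D : R -> Prop)
  (HD : F D)
  (Hcmp : forall x y, D x -> D y -> Rabs (If x - If y) <= Rabs (Ig x - Ig y))
  (lg : R) (Hg : filterlim Ig F (locally lg)) :
  exists l, filterlim If F (locally l).
Proof.
  apply cauchy_lim; auto. intro eps.
  assert (He : 0 < eps / 2) by (destruct eps; simpl; lra).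
  pose proof (proj1 (filterlim_locally Ig lg) Hg (mkposreal _ He)) as H.
  exists (fun b => D b /\ ball lg (eps/2) (Ig b)). split.
  - apply filter_and; auto.
  - intros x y [Dx Bx] [Dy By]. change (Rabs (Ig x - lg) < eps/2) in Bx. change (Rabs (Ig y - lg) < eps/2) in By.
    eapply Rle_lt_trans. apply Hcmp; auto.
    replace (Ig x - Ig y) with ((Ig x - lg) - (Ig y - lg)) by ring.
    eapply Rle_lt_trans. apply Rabs_triang. rewrite Rabs_Ropp. lra.
Qed.

Lemma gen_of_lim (F : (R -> Prop) -> Prop) (FF : Filter F) (f : R -> R) (a : R) (I : R -> R) (l : R) :
  F (fun b => is_RInt f a b (I b)) -> filterlim I F (locally l) ->
  is_RInt_gen f (at_point a) F l.
Proof.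
  intros H1 H2 P HP.
  apply Filter_prod with (fun x => x = a) (fun b => is_RInt f a b (I b) /\ P (I b)).
  - reflexivity.
  - apply filter_and; [exact H1 | exact (H2 P HP)].
  - intros x y -> [Hi Hp]. exists (I y). simpl. auto.
Qed.

Lemma lim_locE {F} {FF : Filter F} (I : R -> R) l :
  filterlim I F (locally l) <-> forall eps : posreal, F (fun b => Rabs (I b - l) < eps).
Proof. exact (filterlim_locally (F:=F) I l). Qed.

Lemma lim_plus {F} {FF : Filter F} (I J : R -> R) a b :
  filterlim I F (locally a) -> filterlim J F (locally b) ->
  filterlim (fun x => I x + J x) F (locally (a + b)).
Proof.
  rewrite !lim_locE. intros H1 H2 eps.
  assert (He : 0 < eps / 2) by (destruct eps; simpl; lra).
  apply filter_imp with (fun x => Rabs (I x - a) < eps/2 /\ Rabs (J x - b) < eps/2).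
  - intros x [h1 h2]. replace (I x + J x - (a + b)) with ((I x - a) + (J x - b)) by ring.
    eapply Rle_lt_trans. apply Rabs_triang. lra.
  - apply filter_and; [apply (H1 (mkposreal _ He)) | apply (H2 (mkposreal _ He))].
Qed.

Lemma lim_scal {F} {FF : Filter F} (I : R -> R) c a :
  filterlim I F (locally a) -> filterlim (fun x => c * I x) F (locally (c * a)).
Proof.
  rewrite !lim_locE. intros H1 eps.
  assert (He : 0 < eps / (Rabs c + 1)).
  { apply Rdiv_lt_0_compat. destruct eps; simpl; lra. pose proof (Rabs_pos c); lra. }
  apply filter_imp with (fun x => Rabs (I x - a) < eps / (Rabs c + 1)).
  - intros x h. replace (c * I x - c * a) with (c * (I x - a)) by ring.
    rewrite Rabs_mult. pose proof (Rabs_pos c). pose proof (Rabs_pos (I x - a)).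
    apply Rle_lt_trans with ((Rabs c + 1) * Rabs (I x - a)). nra.
    apply Rmult_lt_reg_r with (/ (Rabs c + 1)). apply Rinv_0_lt_compat; lra.
    replace ((Rabs c + 1) * Rabs (I x - a) * / (Rabs c + 1)) with (Rabs (I x - a)) by (field; lra).
    exact h.
  - apply (H1 (mkposreal _ He)).
Qed.

Lemma lim_const {F} {FF : Filter F} (c : R) : filterlim (fun _ : R => c) F (locally (T:=R_UniformSpace) c).
Proof.
  rewrite lim_locE. intro eps. apply filter_forall. intro. rewrite Rminus_eq_0, Rabs_R0. apply cond_pos.
Qed.

Lemma lim_ext {F} {FF : Filter F} (I J : R -> R) a :
  F (fun x => I x = J x) -> filterlim I F (locally a) -> filterlim J F (locally a).
Proof.
  rewrite !lim_locE. intros He H eps. apply filter_imp with (fun x => I x = J x /\ Rabs (I x - a) < eps).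
  intros x [h1 h2]. rewrite <- h1. exact h2. apply filter_and; auto.
Qed.

Lemma lim_squeeze0 {F} {FF : Filter F} (I J : R -> R) :
  F (fun x => Rabs (I x) <= J x) -> filterlim J F (locally 0) -> filterlim I F (locally 0).
Proof.
  rewrite !lim_locE. intros He H eps. apply filter_imp with (fun x => Rabs (I x) <= J x /\ Rabs (J x - 0) < eps).
  intros x [h1 h2]. rewrite Rminus_0_r in *. pose proof (Rle_abs (J x)). lra.
  apply filter_and; auto.
Qed.

Lemma lim_le2 {F} {FF : ProperFilter F} (I J : R -> R) a b :
  F (fun x => I x <= J x) -> filterlim I F (locally a) -> filterlim J F (locally b) -> a <= b.
Proof.
  rewrite !lim_locE. intros He H1 H2. destruct (Rle_or_lt a b) as [h|h]; auto. exfalso.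
  assert (Hd : 0 < (a - b) / 2) by lra.
  destruct (filter_ex _ (filter_and _ _ He (filter_and _ _ (H1 (mkposreal _ Hd)) (H2 (mkposreal _ Hd)))))
    as [x [h1 [h2 h3]]]. simpl in *.
  apply Rabs_def2 in h2. apply Rabs_def2 in h3. lra.
Qed.

Lemma plusR (a b : R) : plus a b = a + b. Proof. reflexivity. Qed.
Lemma multR (a b : R) : mult a b = a * b. Proof. reflexivity. Qed.
Lemma oppR (a : R) : opp a = - a. Proof. reflexivity. Qed.
Lemma minusR (a b : R) : minus a b = a - b. Proof. reflexivity. Qed.
Lemma zeroR : (zero : R) = 0. Proof. reflexivity. Qed.

Lemma bound_RInt (f g : R -> R) y x : y <= x -> ex_RInt f y x -> ex_RInt g y x ->
  (forall z, y <= z <= x -> Rabs (f z) <= g z) -> Rabs (RInt f y x) <= RInt g y x.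
Proof.
  intros Hyx Hf Hg H.
  assert (H1 : RInt f y x <= RInt g y x).
  { apply RInt_le; auto. intros z Hz. pose proof (H z ltac:(lra)). pose proof (Rle_abs (f z)). lra. }
  assert (H2 : RInt (fun z => opp (g z)) y x <= RInt f y x).
  { apply RInt_le; auto. apply (ex_RInt_opp g); auto. intros z Hz. rewrite oppR.
    pose proof (H z ltac:(lra)) as Hz1. pose proof (Rle_abs (- f z)) as Hz2. rewrite Rabs_Ropp in Hz2. lra. }
  rewrite (RInt_opp (V:=R_CompleteNormedModule) g) in H2 by auto. rewrite oppR in H2.
  apply Rabs_le. lra.
Qed.

Lemma cmp_RInt (f g : R -> R) a x y : ex_RInt f a x -> ex_RInt f a y -> ex_RInt g a x -> ex_RInt g a y ->
  (forall z, Rmin x y <= z <= Rmax x y -> Rabs (f z) <= g z) ->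
  Rabs (RInt f a x - RInt f a y) <= Rabs (RInt g a x - RInt g a y).
Proof.
  intros Hfx Hfy Hgx Hgy H.
  assert (Ef : forall p q, ex_RInt f a p -> ex_RInt f a q -> RInt f a p - RInt f a q = RInt f q p).
  { intros p q Hp Hq. rewrite <- (RInt_Chasles f a q p); auto.
    rewrite plusR; ring. apply ex_RInt_Chasles with a; auto. apply ex_RInt_swap; auto. }
  assert (Eg : forall p q, ex_RInt g a p -> ex_RInt g a q -> RInt g a p - RInt g a q = RInt g q p).
  { intros p q Hp Hq. rewrite <- (RInt_Chasles g a q p); auto.
    rewrite plusR; ring. apply ex_RInt_Chasles with a; auto. apply ex_RInt_swap; auto. }
  assert (Xf : ex_RInt f x y /\ ex_RInt f y x).
  { split; apply ex_RInt_Chasles with a; auto; apply ex_RInt_swap; auto. }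
  assert (Xg : ex_RInt g x y /\ ex_RInt g y x).
  { split; apply ex_RInt_Chasles with a; auto; apply ex_RInt_swap; auto. }
  destruct Xf as [Xf1 Xf2]. destruct Xg as [Xg1 Xg2].
  destruct (Rle_or_lt y x) as [h|h].
  - rewrite Ef, Eg by auto.
    eapply Rle_trans. apply bound_RInt; [exact h | exact Xf2 | exact Xg2 | ].
    intros z Hz. apply H. rewrite Rmin_right, Rmax_left by lra. lra.
    apply Rle_abs.
  - rewrite (Rabs_minus_sym (RInt f a x)), (Rabs_minus_sym (RInt g a x)).
    rewrite Ef, Eg by auto.
    eapply Rle_trans. apply bound_RInt; [lra | exact Xf1 | exact Xg1 | ].
    intros z Hz. apply H. rewrite Rmin_left, Rmax_right by lra. lra.
    apply Rle_abs.
Qed.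

Lemma cont_rp1 y t : 0 < t -> continuous (fun s => Rpower s y) t.
Proof.
  intro Ht. apply (ex_derive_continuous (K:=R_AbsRing) (V:=R_NormedModule)). exists (y * Rpower t (y - 1)).
  apply is_derive_Reals. apply derivable_pt_lim_power; auto.
Qed.

Lemma cont_rpc c y t : t < c -> continuous (fun s => Rpower (c - s) y) t.
Proof.
  intro Ht. apply (ex_derive_continuous (K:=R_AbsRing) (V:=R_NormedModule)). eexists. apply der_rp; auto.
Qed.

Lemma cont_expm t : continuous (fun s => exp (- s)) t.
Proof. apply (ex_derive_continuous (K:=R_AbsRing) (V:=R_NormedModule)). auto_derive; auto. Qed.

Lemma cont_mult (f g : R -> R) t : continuous f t -> continuous g t -> continuous (fun s => f s * g s) t.
Proof. intros. apply (continuous_mult f g); auto. Qed.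

Lemma der_rp1 y t : 0 < t -> is_derive (fun s => Rpower s y) t (y * Rpower t (y - 1)).
Proof. intro Ht. apply is_derive_Reals. apply derivable_pt_lim_power; auto. Qed.

Definition f1 (a : R) := fun t => Rpower t (- a) * exp (- t).
Definition f2 (a : R) := fun t => Rpower t (1 - a) * exp (- t).

Lemma f1_cont a t : 0 < t -> continuous (f1 a) t.
Proof. intro. apply cont_mult. apply cont_rp1; auto. apply cont_expm. Qed.
Lemma f2_cont a t : 0 < t -> continuous (f2 a) t.
Proof. intro. apply cont_mult. apply cont_rp1; auto. apply cont_expm. Qed.

Lemma ex_pos (f : R -> R) x y : 0 < x -> 0 < y -> (forall t, 0 < t -> continuous f t) -> ex_RInt f x y.
Proof.
  intros Hx Hy Hc. apply (ex_RInt_continuous (V:=R_CompleteNormedModule)). intros z Hz. apply Hc.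
  assert (0 < Rmin x y) by (apply Rmin_glb_lt; auto). lra.
Qed.

Lemma lim_expc c : 0 < c -> filterlim (fun b => exp (- (c * b))) (Rbar_locally p_infty) (locally 0).
Proof.
  intro Hc. apply lim_locE. intro eps. exists (/ (c * eps)). intros x Hx.
  rewrite Rminus_0_r. rewrite Rabs_pos_eq by (left; apply exp_pos).
  destruct eps as [e He]; simpl in *.
  assert (Hp : 0 < c * e) by nra.
  assert (Hx2 : 1 < c * e * x).
  { apply Rmult_lt_compat_l with (r := c * e) in Hx; auto. rewrite Rinv_r in Hx; lra. }
  pose proof (exp_ineq1_le (c * x)) as H1.
  assert (Hex : exp (- (c * x)) * exp (c * x) = 1).
  { rewrite <- exp_plus. replace (- (c * x) + c * x) with 0 by ring. apply exp_0. }
  pose proof (exp_pos (- (c * x))) as H2.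
  assert (H3 : exp (- (c * x)) * (1 + c * x) <= 1).
  { rewrite <- Hex. apply Rmult_le_compat_l; lra. }
  assert (H4 : 0 < 1 + c * x) by nra.
  destruct (Rlt_or_le (exp (- (c * x))) e) as [h|h]; auto.
  assert (e * (1 + c * x) <= exp (- (c * x)) * (1 + c * x)) by (apply Rmult_le_compat_r; lra).
  nra.
Qed.

Lemma rp_le1 a t : 0 < a -> 1 <= t -> Rpower t (- a) <= 1.
Proof.
  intros Ha Ht. unfold Rpower. rewrite <- exp_0. 
  destruct (Req_dec (- a * ln t) 0) as [e|e]. rewrite e; lra.
  left. apply exp_increasing. pose proof (ln_le 1 t ltac:(lra) Ht) as H. rewrite ln_1 in H.
  assert (ln t <> 0) by (intro E; apply e; rewrite E; ring).
  assert (0 < ln t) by lra. nra.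
Qed.

Lemma gA a : 0 < a < 1 -> exists lA, is_RInt_gen (f1 a) (at_point 1) (at_right 0) lA /\ lA <= 0
  /\ filterlim (fun b => RInt (f1 a) 1 b) (at_right 0) (locally lA).
Proof.
  intros Ha.
  set (g := fun t => Rpower t (- a)).
  set (phi := fun t => / (1 - a) * Rpower t (1 - a)).
  assert (Hgi : forall b, 0 < b -> is_RInt g 1 b (phi b - phi 1)).
  { intros b Hb. apply (is_RInt_derive (V:=R_CompleteNormedModule) phi g).
    - intros x Hx. assert (0 < x). { assert (0 < Rmin 1 b) by (apply Rmin_glb_lt; lra). lra. }
      unfold phi, g. 
      assert (Hd := der_rp1 (1 - a) x H).
      replace (1 - a - 1) with (- a) in Hd by ring.
      apply (is_derive_scal (fun s => Rpower s (1 - a))) with (k := / (1 - a)) in Hd.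
      replace (Rpower x (- a)) with (/ (1 - a) * ((1 - a) * Rpower x (- a))) by (field; lra).
      exact Hd.
    - intros x Hx. assert (0 < x). { assert (0 < Rmin 1 b) by (apply Rmin_glb_lt; lra). lra. }
      apply cont_rp1; auto. }
  assert (Hgc : forall t, 0 < t -> continuous g t) by (intros; apply cont_rp1; auto).
  assert (Hfc : forall t, 0 < t -> continuous (f1 a) t) by (intros; apply f1_cont; auto).
  assert (HD : at_right 0 (fun b => 0 < b < 1)).
  { exists (mkposreal 1 Rlt_0_1). intros x Hx Hx0. change (Rabs (x - 0) < 1) in Hx.
    rewrite Rminus_0_r in Hx. apply Rabs_def2 in Hx. lra. }
  destruct (ex_lim_cmp (at_right 0) (at_right_proper_filter 0) (fun b => RInt (f1 a) 1 b)
              (fun b => RInt g 1 b) (fun b => 0 < b < 1) HD) with (lg := 0 - phi 1) as [lA HlA].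
  - intros x y Hx Hy. apply cmp_RInt; try apply ex_pos; try lra; auto.
    intros z Hz. assert (0 < z). { assert (0 < Rmin x y) by (apply Rmin_glb_lt; lra). lra. }
    unfold f1, g. rewrite Rabs_pos_eq by (left; apply Rmult_lt_0_compat; [apply rp_pos | apply exp_pos]).
    pose proof (rp_pos z (- a)). assert (exp (- z) <= 1).
    { rewrite <- exp_0. left. apply exp_increasing. lra. } nra.
  - apply lim_ext with (fun b => phi b + - phi 1).
    + apply filter_imp with (fun b => 0 < b < 1); auto. intros b Hb. symmetry.
      apply is_RInt_unique. replace (phi b + - phi 1) with (phi b - phi 1) by ring. apply Hgi; lra.
    + replace (0 - phi 1) with (/ (1 - a) * 0 + - phi 1) by ring.
      apply lim_plus. unfold phi. apply lim_scal. apply rp_lim0. lra. apply lim_const.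
  - exists lA. split; [ | split; [ | exact HlA]].
    + apply (gen_of_lim (at_right 0) _ (f1 a) 1 (fun b => RInt (f1 a) 1 b) lA); auto.
      apply filter_imp with (fun b => 0 < b < 1); auto. intros b Hb. apply (RInt_correct (V:=R_CompleteNormedModule)).
      apply ex_pos; auto; lra.
    + apply (lim_le2 (F := at_right 0) (fun b => RInt (f1 a) 1 b) (fun _ => 0)); auto.
      apply filter_imp with (fun b => 0 < b < 1); auto. intros b Hb.
      rewrite <- (opp_RInt_swap (V:=R_CompleteNormedModule)) by (apply ex_pos; lra || auto).
      rewrite oppR. assert (0 <= RInt (f1 a) b 1).
      { apply RInt_ge_0. lra. apply ex_pos; auto; lra. intros x Hx. unfold f1.
        left; apply Rmult_lt_0_compat; [apply rp_pos | apply exp_pos]. }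
      lra. apply lim_const.
Qed.

Lemma exp_le_mono x y : x <= y -> exp x <= exp y.
Proof. intros [h|h]. left; apply exp_increasing; auto. subst; lra. Qed.

Lemma gB a : 0 < a < 1 -> exists lB, is_RInt_gen (f1 a) (at_point 1) (Rbar_locally p_infty) lB /\ exp (-2) / 2 <= lB
  /\ filterlim (fun b => RInt (f1 a) 1 b) (Rbar_locally p_infty) (locally lB).
Proof.
  intros Ha.
  set (g := fun t => exp (- t)).
  set (phi := fun t => - exp (- t)).
  assert (Hgi : forall b, is_RInt g 1 b (phi b - phi 1)).
  { intros b. apply (is_RInt_derive (V:=R_CompleteNormedModule) phi g).
    - intros x Hx. unfold phi, g. auto_derive; auto; ring.
    - intros x Hx. apply cont_expm. }
  assert (Hgc : forall t, continuous g t) by (intros; apply cont_expm).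
  assert (Hfc : forall t, 0 < t -> continuous (f1 a) t) by (intros; apply f1_cont; auto).
  assert (HD : Rbar_locally p_infty (fun b => 1 < b)) by (exists 1; auto).
  assert (Hex : forall x y, 0 < x -> 0 < y -> ex_RInt (f1 a) x y) by (intros; apply ex_pos; auto).
  destruct (ex_lim_cmp (Rbar_locally p_infty) (Rbar_locally_filter p_infty) (fun b => RInt (f1 a) 1 b)
              (fun b => RInt g 1 b) (fun b => 1 < b) HD) with (lg := 0 - phi 1) as [lB HlB].
  - intros x y Hx Hy. apply cmp_RInt; try apply Hex; try lra; try (eexists; apply Hgi).
    intros z Hz. assert (1 <= z). { assert (1 < Rmin x y) by (apply Rmin_glb_lt; lra). lra. }
    unfold f1, g. rewrite Rabs_pos_eq by (left; apply Rmult_lt_0_compat; [apply rp_pos | apply exp_pos]).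
    pose proof (rp_le1 a z ltac:(lra) H). pose proof (exp_pos (- z)). nra.
  - apply lim_ext with (fun b => -1 * exp (- (1 * b)) + - phi 1).
    + apply filter_forall. intros b. symmetry.
      apply is_RInt_unique. replace (-1 * exp (- (1 * b)) + - phi 1) with (phi b - phi 1).
      apply Hgi. unfold phi. replace (1 * b) with b by ring. ring.
    + replace (0 - phi 1) with (-1 * 0 + - phi 1) by ring.
      apply lim_plus. apply lim_scal. apply lim_expc. lra. apply lim_const.
  - exists lB. split; [ | split; [ | exact HlB]].
    + apply (gen_of_lim (Rbar_locally p_infty) _ (f1 a) 1 (fun b => RInt (f1 a) 1 b) lB); auto.
      apply filter_imp with (fun b => 1 < b); auto. intros b Hb.
      apply (RInt_correct (V:=R_CompleteNormedModule)). apply Hex; lra.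
    + set (psi := fun t => - / 2 * exp (- (2 * t))).
      assert (Hpi : forall b, is_RInt (fun t => exp (- (2 * t))) 1 b (psi b - psi 1)).
      { intros b. apply (is_RInt_derive (V:=R_CompleteNormedModule) psi).
        - intros x Hx. unfold psi. auto_derive; auto; field.
        - intros x Hx. apply (ex_derive_continuous (K:=R_AbsRing) (V:=R_NormedModule)). auto_derive; auto. }
      apply (lim_le2 (F := Rbar_locally p_infty) (fun b => psi b - psi 1) (fun b => RInt (f1 a) 1 b)); auto.
      * apply filter_imp with (fun b => 1 < b); auto. intros b Hb.
        rewrite <- (is_RInt_unique _ _ _ _ (Hpi b)).
        apply RInt_le. lra. eexists; apply Hpi. apply Hex; lra.
        intros x Hx. unfold f1.
        replace (- (2 * x)) with (- x + - x) by ring. rewrite exp_plus.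
        apply Rmult_le_compat_r. left; apply exp_pos.
        unfold Rpower. apply exp_le_mono.
        pose proof (exp_ineq1_le (ln x)) as E. rewrite exp_ln in E by lra.
        pose proof (ln_le 1 x ltac:(lra) ltac:(lra)) as L. rewrite ln_1 in L. nra.
      * apply lim_ext with (fun b => - / 2 * exp (- (2 * b)) + - psi 1).
        apply filter_forall; intro b; unfold psi; ring.
        replace (exp (-2) / 2) with (- / 2 * 0 + - psi 1) by (unfold psi; replace (- (2 * 1)) with (-2) by ring; field).
        apply lim_plus. apply lim_scal. apply lim_expc. lra. apply lim_const.
Qed.

Lemma Gamma1_val a : 0 < a < 1 -> Gamma (1 - a) = RInt_gen (f1 a) (at_right 0) (Rbar_locally p_infty).
Proof. intros. unfold Gamma. replace (1 - a - 1) with (- a) by ring. reflexivity. Qed.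
Lemma Gamma2_val a : 0 < a < 1 -> Gamma (2 - a) = RInt_gen (f2 a) (at_right 0) (Rbar_locally p_infty).
Proof. intros. unfold Gamma. replace (2 - a - 1) with (1 - a) by ring. reflexivity. Qed.

Lemma psi_der a t : 0 < t ->
  is_derive (fun s => Rpower s (1 - a) * exp (- s)) t ((1 - a) * f1 a t - f2 a t).
Proof.
  intro Ht.
  assert (H1 := der_rp1 (1 - a) t Ht). replace (1 - a - 1) with (- a) in H1 by ring.
  assert (H2 : is_derive (fun s => exp (- s)) t (- exp (- t))) by (auto_derive; try ring; auto).
  pose proof (is_derive_mult (fun s => Rpower s (1 - a)) (fun s => exp (- s)) t _ _ H1 H2 (fun n m => Rmult_comm n m)) as H.
  unfold f1, f2. replace ((1 - a) * (Rpower t (- a) * exp (- t)) - Rpower t (1 - a) * exp (- t))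
    with (plus (mult ((1 - a) * Rpower t (- a)) (exp (- t))) (mult (Rpower t (1 - a)) (- exp (- t))))
    by (unfold plus, mult; simpl; ring).
  exact H.
Qed.

Lemma Gamma_facts a : 0 < a < 1 -> 0 < Gamma (1 - a) /\ Gamma (2 - a) = (1 - a) * Gamma (1 - a).
Proof.
  intro Ha.
  destruct (gA a Ha) as [lA [HA1 [HA2 HA3]]].
  destruct (gB a Ha) as [lB [HB1 [HB2 HB3]]].
  assert (G1 : Gamma (1 - a) = lB - lA).
  { rewrite Gamma1_val by auto. apply is_RInt_gen_unique.
    apply is_RInt_gen_swap in HA1; try apply filter_filter; try apply at_point_filter.
    replace (lB - lA) with (plus (opp lA) lB) by (unfold plus, opp; simpl; ring).
    apply (@is_RInt_gen_Chasles R_NormedModule (at_right 0) (Rbar_locally p_infty) _ _ (f1 a) 1); auto. }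
  split.
  { rewrite G1. pose proof (exp_pos (-2)). lra. }
  set (psi := fun s => Rpower s (1 - a) * exp (- s)).
  assert (Hi2 : forall b, 0 < b -> is_RInt (f2 a) 1 b ((1 - a) * RInt (f1 a) 1 b - (psi b - psi 1))).
  { intros b Hb.
    assert (Hmn : 0 < Rmin 1 b) by (apply Rmin_glb_lt; lra).
    assert (Hp : is_RInt (fun t => (1 - a) * f1 a t - f2 a t) 1 b (psi b - psi 1)).
    { apply (is_RInt_derive (V:=R_CompleteNormedModule) psi).
      - intros x Hx. apply psi_der. lra.
      - intros x Hx. assert (0 < x) by lra.
        apply (continuous_minus (fun t => (1 - a) * f1 a t) (f2 a)).
        apply (continuous_scal_r (1 - a) (f1 a)). apply f1_cont; auto. apply f2_cont; auto. }
    assert (Hf : is_RInt (f1 a) 1 b (RInt (f1 a) 1 b)).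
    { apply (RInt_correct (V:=R_CompleteNormedModule)). apply ex_pos; auto; try lra. intros; apply f1_cont; auto. }
    pose proof (is_RInt_minus _ _ _ _ _ _ (is_RInt_scal _ _ _ (1 - a) _ Hf) Hp) as H.
    eapply is_RInt_ext; [ | exact H]. intros x Hx. simpl. rewrite minusR, scalR. ring. }
  assert (E0 : filterlim (fun b => RInt (f2 a) 1 b) (at_right 0) (locally ((1 - a) * lA + - (0 - psi 1)))).
  { apply lim_ext with (fun b => (1 - a) * RInt (f1 a) 1 b + -1 * (psi b - psi 1)).
    - exists (mkposreal 1 Rlt_0_1). intros b _ Hb. symmetry. apply is_RInt_unique.
      replace ((1 - a) * RInt (f1 a) 1 b + -1 * (psi b - psi 1)) with ((1 - a) * RInt (f1 a) 1 b - (psi b - psi 1)) by ring.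
      apply Hi2; auto.
    - replace (- (0 - psi 1)) with (-1 * (0 + - psi 1)) by ring.
      apply lim_plus. apply lim_scal; auto. apply lim_scal. apply lim_plus; [ | apply lim_const].
      apply lim_squeeze0 with (fun b => Rpower b (1 - a)).
      + exists (mkposreal 1 Rlt_0_1). intros b _ Hb. unfold psi.
        rewrite Rabs_pos_eq by (left; apply Rmult_lt_0_compat; [apply rp_pos | apply exp_pos]).
        assert (exp (- b) <= 1) by (rewrite <- exp_0; apply exp_le_mono; lra).
        pose proof (rp_pos b (1 - a)). nra.
      + apply rp_lim0. lra. }
  assert (E1 : filterlim (fun b => RInt (f2 a) 1 b) (Rbar_locally p_infty) (locally ((1 - a) * lB + - (0 - psi 1)))).
  { apply lim_ext with (fun b => (1 - a) * RInt (f1 a) 1 b + -1 * (psi b - psi 1)).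
    - exists 0. intros b Hb. symmetry. apply is_RInt_unique.
      replace ((1 - a) * RInt (f1 a) 1 b + -1 * (psi b - psi 1)) with ((1 - a) * RInt (f1 a) 1 b - (psi b - psi 1)) by ring.
      apply Hi2; auto.
    - replace (- (0 - psi 1)) with (-1 * (0 + - psi 1)) by ring.
      apply lim_plus. apply lim_scal; auto. apply lim_scal. apply lim_plus; [ | apply lim_const].
      apply lim_squeeze0 with (fun b => 2 * exp (- (/ 2 * b))).
      + exists 1. intros b Hb. unfold psi.
        rewrite Rabs_pos_eq by (left; apply Rmult_lt_0_compat; [apply rp_pos | apply exp_pos]).
        assert (R1 : Rpower b (1 - a) <= b).
        { rewrite <- (Rpower_1 b) at 2 by lra. apply Rle_Rpower; lra. }
        assert (R2 : b <= 2 * exp (/ 2 * b)).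
        { pose proof (exp_ineq1_le (/ 2 * b)). lra. }
        assert (R3 : exp (- b) = exp (- (/ 2 * b)) * exp (- (/ 2 * b))).
        { rewrite <- exp_plus. replace (- (/ 2 * b) + - (/ 2 * b)) with (- b) by field. reflexivity. }
        assert (R4 : exp (/ 2 * b) * exp (- (/ 2 * b)) = 1).
        { rewrite <- exp_plus. replace (/ 2 * b + - (/ 2 * b)) with 0 by ring. apply exp_0. }
        pose proof (exp_pos (- (/ 2 * b))). pose proof (exp_pos (- b)).
        apply Rle_trans with (b * exp (- b)). apply Rmult_le_compat_r; lra.
        rewrite R3. 
        apply Rle_trans with (2 * exp (/ 2 * b) * exp (- (/ 2 * b)) * exp (- (/ 2 * b))).
        rewrite <- Rmult_assoc. apply Rmult_le_compat_r; [lra | ]. apply Rmult_le_compat_r; lra.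
        replace (2 * exp (/ 2 * b) * exp (- (/ 2 * b)) * exp (- (/ 2 * b))) with (2 * (exp (/ 2 * b) * exp (- (/ 2 * b))) * exp (- (/ 2 * b))) by ring. rewrite R4. lra.
      + replace 0 with (2 * 0) by ring. apply lim_scal. apply lim_expc. lra. }
  assert (HA' : is_RInt_gen (f2 a) (at_point 1) (at_right 0) ((1 - a) * lA + - (0 - psi 1))).
  { apply (gen_of_lim (at_right 0) _ (f2 a) 1 (fun b => RInt (f2 a) 1 b)); auto.
    exists (mkposreal 1 Rlt_0_1). intros b _ Hb. apply (RInt_correct (V:=R_CompleteNormedModule)).
    apply ex_pos; auto; try lra. intros; apply f2_cont; auto. }
  assert (HB' : is_RInt_gen (f2 a) (at_point 1) (Rbar_locally p_infty) ((1 - a) * lB + - (0 - psi 1))).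
  { apply (gen_of_lim (Rbar_locally p_infty) _ (f2 a) 1 (fun b => RInt (f2 a) 1 b)); auto.
    exists 0. intros b Hb. apply (RInt_correct (V:=R_CompleteNormedModule)).
    apply ex_pos; auto; try lra. intros; apply f2_cont; auto. }
  rewrite Gamma2_val by auto. apply is_RInt_gen_unique.
  apply is_RInt_gen_swap in HA'; try apply filter_filter; try apply at_point_filter.
  replace ((1 - a) * Gamma (1 - a)) with (plus (opp ((1 - a) * lA + - (0 - psi 1))) ((1 - a) * lB + - (0 - psi 1)))
    by (rewrite G1; unfold plus, opp; simpl; ring).
  apply (@is_RInt_gen_Chasles R_NormedModule (at_right 0) (Rbar_locally p_infty) _ _ (f2 a) 1); auto.
Qed.

Lemma cont_of_der (f : R -> R) x l : is_derive f x l -> continuity_pt f x.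
Proof.
  intro H. apply continuity_pt_filterlim.
  apply (ex_derive_continuous (K:=R_AbsRing) (V:=R_NormedModule)). eexists; eauto.
Qed.

Lemma is_derive_eq (f g : R -> R) x (l l' : R) :
  (forall t, f t = g t) -> l = l' -> is_derive f x l -> is_derive g x l'.
Proof. intros H1 H2 H. subst l'. apply (is_derive_ext f g x l H1 H). Qed.

Lemma convex0 (phi dphi d2phi : R -> R) a b :
  (forall t, a <= t <= b -> is_derive phi t (dphi t)) ->
  (forall t, a <= t <= b -> is_derive dphi t (d2phi t)) ->
  (forall t, a <= t <= b -> 0 <= d2phi t) ->
  phi a = 0 -> phi b = 0 -> forall t, a <= t <= b -> phi t <= 0.
Proof.
  intros H1 H2 H3 Ha Hb t Ht.
  destruct (Rle_or_lt (phi t) 0) as [h|h]; auto. exfalso.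
  assert (Hta : a < t) by (destruct (Req_dec a t); [subst; lra | lra]).
  assert (Htb : t < b) by (destruct (Req_dec t b); [subst; lra | lra]).
  destruct (MVT_gen phi a t dphi) as [c1 [Hc1 E1]].
  { intros x Hx. apply H1. rewrite Rmin_left, Rmax_right in Hx by lra. lra. }
  { intros x Hx. eapply cont_of_der. apply H1. rewrite Rmin_left, Rmax_right in Hx by lra. lra. }
  destruct (MVT_gen phi t b dphi) as [c2 [Hc2 E2]].
  { intros x Hx. apply H1. rewrite Rmin_left, Rmax_right in Hx by lra. lra. }
  { intros x Hx. eapply cont_of_der. apply H1. rewrite Rmin_left, Rmax_right in Hx by lra. lra. }
  rewrite Rmin_left, Rmax_right in Hc1 by lra. rewrite Rmin_left, Rmax_right in Hc2 by lra.
  destruct (MVT_gen dphi c1 c2 d2phi) as [c3 [Hc3 E3]].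
  { intros x Hx. apply H2. rewrite Rmin_left, Rmax_right in Hx by lra. lra. }
  { intros x Hx. eapply cont_of_der. apply H2. rewrite Rmin_left, Rmax_right in Hx by lra. lra. }
  rewrite Rmin_left, Rmax_right in Hc3 by lra.
  assert (d1 : dphi c1 > 0).
  { assert (dphi c1 * (t - a) > 0) by lra. destruct (Rle_or_lt (dphi c1) 0); auto. nra. }
  assert (d2 : dphi c2 < 0).
  { assert (dphi c2 * (b - t) < 0) by lra. destruct (Rle_or_lt 0 (dphi c2)); auto. nra. }
  pose proof (H3 c3 ltac:(lra)). nra.
Qed.

Lemma interp_err (u : R -> R) a b M : a < b ->
  (forall t, a <= t <= b -> ex_derive u t) ->
  (forall t, a <= t <= b -> ex_derive (Derive u) t) ->
  (forall t, a <= t <= b -> Rabs (Derive (Derive u) t) <= M) ->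
  forall t, a <= t <= b ->
  Rabs (u t - u a - (u b - u a) / (b - a) * (t - a)) <= M / 2 * (t - a) * (b - t).
Proof.
  intros Hab H1 H2 HM.
  set (d := (u b - u a) / (b - a)).
  assert (key : forall s, s = 1 \/ s = -1 -> forall t, a <= t <= b ->
     s * (u t - u a - d * (t - a)) - M / 2 * (t - a) * (b - t) <= 0).
  { intros s Hs.
    apply (convex0 (fun t => s * (u t - u a - d * (t - a)) - M / 2 * (t - a) * (b - t))
                   (fun t => s * (Derive u t - d) - M / 2 * (a + b - 2 * t))
                   (fun t => s * Derive (Derive u) t + M)).
    - intros t Ht.
      assert (D1 : is_derive u t (Derive u t)) by (apply Derive_correct; auto).
      assert (D2 : is_derive (fun t => - u a - d * (t - a)) t (- d)) by (auto_derive; try ring; auto).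
      pose proof (is_derive_plus _ _ _ _ _ D1 D2) as D3.
      pose proof (is_derive_scal _ _ s _ D3) as D4.
      assert (D5 : is_derive (fun t => M / 2 * (t - a) * (b - t)) t (M / 2 * (a + b - 2 * t))) by (auto_derive; try ring; auto).
      pose proof (is_derive_minus _ _ _ _ _ D4 D5) as D6.
      revert D6. apply is_derive_eq.
      intro x. unfold minus, plus, opp; simpl. ring.
      unfold minus, plus, opp; simpl. ring.
    - intros t Ht.
      assert (D1 : is_derive (Derive u) t (Derive (Derive u) t)) by (apply Derive_correct; auto).
      assert (D2 : is_derive (fun t => - d) t 0) by (auto_derive; auto).
      pose proof (is_derive_plus _ _ _ _ _ D1 D2) as D3.
      pose proof (is_derive_scal _ _ s _ D3) as D4.
      assert (D5 : is_derive (fun t => M / 2 * (a + b - 2 * t)) t (- M)). { auto_derive. 2: field. auto. }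
      pose proof (is_derive_minus _ _ _ _ _ D4 D5) as D6.
      revert D6. apply is_derive_eq.
      intro x. unfold minus, plus, opp; simpl. ring.
      unfold minus, plus, opp; simpl. ring.
    - intros t Ht. pose proof (HM t Ht) as h. apply Rabs_le_between in h. destruct Hs; subst; lra.
    - ring.
    - unfold d. field. lra. }
  intros t Ht. apply Rabs_le. fold d.
  pose proof (key 1 (or_introl eq_refl) t Ht). pose proof (key (-1) (or_intror eq_refl) t Ht). lra.
Qed.

Lemma contR (f : R -> R) x : ex_derive f x -> continuous f x.
Proof. apply (ex_derive_continuous (K:=R_AbsRing) (V:=R_NormedModule)). Qed.

Lemma ex_RInt_cont (f : R -> R) a b : a <= b -> (forall t, a <= t <= b -> continuous f t) -> ex_RInt f a b.
Proof.
  intros Hab H. apply (ex_RInt_continuous (V:=R_CompleteNormedModule)). intros z Hz.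
  rewrite Rmin_left, Rmax_right in Hz by lra. apply H; lra.
Qed.

Lemma RInt_uniq (f : R -> R) a b l : is_RInt f a b l -> RInt f a b = l.
Proof. apply (is_RInt_unique (V:=R_CompleteNormedModule)). Qed.

Lemma RInt_corr (f : R -> R) a b : ex_RInt f a b -> is_RInt f a b (RInt f a b).
Proof. apply (RInt_correct (V:=R_CompleteNormedModule)). Qed.

Lemma ibp (u : R -> R) a b' c al dl : a <= b' < c ->
  (forall t, a <= t <= b' -> ex_derive u t) ->
  (forall t, a <= t <= b' -> ex_derive (Derive u) t) ->
  ex_RInt (fun s => (Derive u s - dl) * Rpower (c - s) (- al)) a b' /\
  ex_RInt (fun s => (u s - u a - dl * (s - a)) * (al * Rpower (c - s) (- al - 1))) a b' /\
  RInt (fun s => (Derive u s - dl) * Rpower (c - s) (- al)) a b' =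
    (u b' - u a - dl * (b' - a)) * Rpower (c - b') (- al)
    - RInt (fun s => (u s - u a - dl * (s - a)) * (al * Rpower (c - s) (- al - 1))) a b'.
Proof.
  intros Hab H1 H2.
  set (e := fun s => u s - u a - dl * (s - a)).
  set (g1 := fun s => (Derive u s - dl) * Rpower (c - s) (- al)).
  set (g2 := fun s => e s * (al * Rpower (c - s) (- al - 1))).
  assert (De : forall t, a <= t <= b' -> is_derive e t (Derive u t - dl)).
  { intros t Ht. unfold e.
    assert (D1 : is_derive u t (Derive u t)) by (apply Derive_correct; auto).
    assert (D2 : is_derive (fun s => - u a - dl * (s - a)) t (- dl)) by (auto_derive; try ring; auto).
    pose proof (is_derive_plus _ _ _ _ _ D1 D2) as D3. revert D3. apply is_derive_eq.
    intro x. unfold plus; simpl. ring. unfold plus; simpl. ring. }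
  assert (C1 : forall t, a <= t <= b' -> continuous g1 t).
  { intros t Ht. unfold g1. apply cont_mult.
    apply (continuous_minus (Derive u) (fun _ => dl)). apply contR; auto. apply continuous_const.
    apply cont_rpc; lra. }
  assert (C2 : forall t, a <= t <= b' -> continuous g2 t).
  { intros t Ht. unfold g2. apply cont_mult.
    apply contR. eexists; apply De; auto.
    apply (continuous_scal_r al (fun s => Rpower (c - s) (- al - 1))). apply cont_rpc; lra. }
  assert (X1 : ex_RInt g1 a b') by (apply ex_RInt_cont; [lra | auto]).
  assert (X2 : ex_RInt g2 a b') by (apply ex_RInt_cont; [lra | auto]).
  split; [exact X1 | split; [exact X2 | ]].
  set (E := fun s => e s * Rpower (c - s) (- al)).
  assert (HE : is_RInt (fun s => g1 s + g2 s) a b' (E b' - E a)).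
  { apply (is_RInt_derive (V:=R_CompleteNormedModule) E).
    - intros x Hx. rewrite Rmin_left, Rmax_right in Hx by lra.
      pose proof (is_derive_mult e (fun s => Rpower (c - s) (- al)) x _ _ (De x Hx) (der_rp c (- al) x ltac:(lra)) (fun n m => Rmult_comm n m)) as D.
      revert D. apply is_derive_eq. intro; reflexivity.
      unfold g1, g2, plus, mult; simpl. ring.
    - intros x Hx. rewrite Rmin_left, Rmax_right in Hx by lra.
      apply (continuous_plus g1 g2); auto. }
  pose proof (is_RInt_plus _ _ _ _ _ _ (RInt_corr g1 a b' X1) (RInt_corr g2 a b' X2)) as HP.
  assert (Eq : RInt g1 a b' + RInt g2 a b' = E b' - E a).
  { rewrite <- (RInt_uniq _ _ _ _ HE). symmetry. apply RInt_uniq. exact HP. }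
  assert (Ea : E a = 0) by (unfold E, e; ring).
  change (RInt g1 a b' = (u b' - u a - dl * (b' - a)) * Rpower (c - b') (- al) - RInt g2 a b'). unfold E, e in Eq, Ea. lra.
Qed.

Lemma pw y al : 0 < y ->
  Rpower y (- al) = y * Rpower y (- al - 1) /\
  Rpower y (1 - al) = y * y * Rpower y (- al - 1) /\
  Rpower y (2 - al) = y * y * y * Rpower y (- al - 1).
Proof.
  intro Hy.
  assert (E1 : Rpower y (- al) = y * Rpower y (- al - 1)).
  { replace (- al) with (1 + (- al - 1)) at 1 by ring. rewrite Rpower_plus, Rpower_1; auto. }
  assert (E2 : Rpower y (1 - al) = y * Rpower y (- al)).
  { replace (1 - al) with (1 + (- al)) by ring. rewrite Rpower_plus, Rpower_1; auto. }
  assert (E3 : Rpower y (2 - al) = y * Rpower y (1 - al)).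
  { replace (2 - al) with (1 + (1 - al)) by ring. rewrite Rpower_plus, Rpower_1; auto. }
  rewrite E3, E2, E1. repeat split; ring.
Qed.

Lemma int_p a b : is_RInt (fun s => (s - a) * (b - s)) a b ((b - a) ^ 3 / 6).
Proof.
  set (F := fun s => - (s - a) ^ 3 / 3 + (b - a) * (s - a) ^ 2 / 2).
  replace ((b - a) ^ 3 / 6) with (F b - F a) by (unfold F; field).
  apply (is_RInt_derive (V:=R_CompleteNormedModule) F).
  - intros x Hx. unfold F. auto_derive; auto. simpl. field.
  - intros x Hx. apply contR. auto_derive; auto.
Qed.

Definition T2 al := 2 * (4 * Rpower 2 (- al) - 1) / (2 - al) - (2 * Rpower 2 (- al) + 1).

Lemma int_T2 a h al : 0 < h -> 0 < al < 1 ->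
  is_RInt (fun s => (s - a) * (a + h - s) * Rpower (a + 2 * h - s) (- al - 1)) a (a + h)
    (h * h * Rpower h (- al) * T2 al / (al * (1 - al))).
Proof.
  intros Hh Ha. set (c := a + 2 * h).
  set (F := fun s => Rpower (c - s) (2 - al) / (2 - al) - 3 * h * Rpower (c - s) (1 - al) / (1 - al)
                      - 2 * h * h * Rpower (c - s) (- al) / al).
  assert (Hv : F (a + h) - F a = h * h * Rpower h (- al) * T2 al / (al * (1 - al))).
  { unfold F. unfold c.
    replace (a + 2 * h - (a + h)) with h by ring. replace (a + 2 * h - a) with (2 * h) by ring.
    rewrite <- !(Rpower_mult_distr 2 h) by lra.
    destruct (pw h al Hh) as [A1 [A2 A3]]. destruct (pw 2 al ltac:(lra)) as [B1 [B2 B3]].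
    unfold T2. rewrite A1, A2, A3, B1, B2, B3. field. lra. }
  rewrite <- Hv.
  apply (is_RInt_derive (V:=R_CompleteNormedModule) F).
  - intros x Hx. rewrite Rmin_left, Rmax_right in Hx by lra.
    assert (Hy : 0 < c - x) by (unfold c; lra).
    pose proof (der_rp c (2 - al) x ltac:(lra)) as D1.
    pose proof (der_rp c (1 - al) x ltac:(lra)) as D2.
    pose proof (der_rp c (- al) x ltac:(lra)) as D3.
    apply (is_derive_scal _ _ (/ (2 - al))) in D1.
    apply (is_derive_scal _ _ (3 * h / (1 - al))) in D2.
    apply (is_derive_scal _ _ (2 * h * h / al)) in D3.
    pose proof (is_derive_minus _ _ _ _ _ (is_derive_minus _ _ _ _ _ D1 D2) D3) as D.
    revert D. apply is_derive_eq.
    + intro t. unfold F, minus, plus, opp; simpl. field. lra.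
    + unfold minus, plus, opp; simpl.
      replace (2 - al - 1) with (1 - al) by ring. replace (1 - al - 1) with (- al) by ring.
      destruct (pw (c - x) al Hy) as [A1 [A2 A3]]. rewrite A1, A2.
      replace (a + h) with (c - h) by (unfold c; ring). replace a with (c - 2 * h) at 1 by (unfold c; ring).
      field. lra.
  - intros x Hx. rewrite Rmin_left, Rmax_right in Hx by lra.
    apply cont_mult. 
    apply (continuous_mult (fun s => s - a) (fun s => a + h - s)); apply contR; auto_derive; auto.
    apply cont_rpc. unfold c; lra.
Qed.

Definition Hm a h al s := - h * Rpower (a + h - s) (1 - al) / (1 - al) + Rpower (a + h - s) (2 - al) / (2 - al).

Lemma int_last a h al b' : 0 < h -> 0 < al < 1 -> a <= b' < a + h ->
  is_RInt (fun s => (s - a) * Rpower (a + h - s) (- al)) a b' (Hm a h al b' - Hm a h al a).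
Proof.
  intros Hh Ha Hb. set (c := a + h).
  apply (is_RInt_derive (V:=R_CompleteNormedModule) (Hm a h al)).
  - intros x Hx. rewrite Rmin_left, Rmax_right in Hx by lra.
    assert (Hy : 0 < c - x) by (unfold c; lra).
    pose proof (der_rp c (1 - al) x ltac:(lra)) as D2.
    pose proof (der_rp c (2 - al) x ltac:(lra)) as D1.
    apply (is_derive_scal _ _ (- h / (1 - al))) in D2.
    apply (is_derive_scal _ _ (/ (2 - al))) in D1.
    pose proof (is_derive_plus _ _ _ _ _ D2 D1) as D.
    revert D. apply is_derive_eq.
    + intro t. unfold Hm, plus; simpl. fold c. field. lra.
    + unfold plus; simpl.
      replace (2 - al - 1) with (1 - al) by ring. replace (1 - al - 1) with (- al) by ring.
      destruct (pw (c - x) al Hy) as [A1 [A2 A3]]. rewrite A1, A2.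
      replace a with (c - h) at 1 by (unfold c; ring).
      field. lra.
  - intros x Hx. rewrite Rmin_left, Rmax_right in Hx by lra.
    apply cont_mult. apply contR; auto_derive; auto.
    apply cont_rpc. unfold c; lra.
Qed.

Lemma Hm_facts a h al b' : 0 < h -> 0 < al < 1 -> a <= b' < a + h ->
  Hm a h al b' <= 0 /\ - Hm a h al a = h * h * Rpower h (- al) / ((1 - al) * (2 - al)).
Proof.
  intros Hh Ha Hb. unfold Hm. split.
  - set (y := a + h - b'). assert (Hy : 0 < y) by (unfold y; lra).
    destruct (pw y al Hy) as [A1 [A2 A3]]. rewrite A2, A3.
    pose proof (rp_pos y (- al - 1)).
    assert (y <= h) by (unfold y; lra).
    assert (y * y * y * Rpower y (- al - 1) / (2 - al) <= h * (y * y * Rpower y (- al - 1)) / (1 - al)).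
    { apply Rle_trans with (h * (y * y * Rpower y (- al - 1)) / (2 - al)).
      - unfold Rdiv. apply Rmult_le_compat_r. left; apply Rinv_0_lt_compat; lra.
        replace (y * y * y * Rpower y (- al - 1)) with (y * (y * y * Rpower y (- al - 1))) by ring.
        apply Rmult_le_compat_r; [ | lra]. apply Rmult_le_pos; [nra | lra].
      - unfold Rdiv. apply Rmult_le_compat_l. apply Rmult_le_pos; [lra | apply Rmult_le_pos; [nra | lra]].
        apply Rinv_le_contravar; lra. }
    unfold Rdiv in *. lra.
  - replace (a + h - a) with h by ring.
    destruct (pw h al Hh) as [A1 [A2 A3]]. rewrite A1, A2, A3. field. lra.
Qed.

Lemma int_K c al a b' : 0 < al < 1 -> a <= b' < c ->
  is_RInt (fun s => Rpower (c - s) (- al)) a b' ((Rpower (c - a) (1 - al) - Rpower (c - b') (1 - al)) / (1 - al)).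
Proof.
  intros Ha Hb.
  set (F := fun s => - Rpower (c - s) (1 - al) / (1 - al)).
  replace ((Rpower (c - a) (1 - al) - Rpower (c - b') (1 - al)) / (1 - al)) with (F b' - F a) by (unfold F; field; lra).
  apply (is_RInt_derive (V:=R_CompleteNormedModule) F).
  - intros x Hx. rewrite Rmin_left, Rmax_right in Hx by lra.
    pose proof (der_rp c (1 - al) x ltac:(lra)) as D.
    apply (is_derive_scal _ _ (- / (1 - al))) in D.
    revert D. apply is_derive_eq.
    + intro t. unfold F. field. lra.
    + replace (1 - al - 1) with (- al) by ring. field. lra.
  - intros x Hx. rewrite Rmin_left, Rmax_right in Hx by lra. apply cont_rpc. lra.
Qed.

Lemma int_exp c w si a b : 0 < si ->
  is_RInt (fun s => w * exp (- (si * (c - s)))) a b (w * (exp (- (si * (c - b))) - exp (- (si * (c - a)))) / si).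
Proof.
  intros Hs.
  set (F := fun s => w * exp (- (si * (c - s))) / si).
  replace (w * (exp (- (si * (c - b))) - exp (- (si * (c - a)))) / si) with (F b - F a) by (unfold F; field; lra).
  apply (is_RInt_derive (V:=R_CompleteNormedModule) F).
  - intros x Hx. unfold F. auto_derive; auto. replace (c + - x) with (c - x) by ring. field. lra.
  - intros x Hx. apply contR. auto_derive; auto.
Qed.

Lemma rp_anti x y z : 0 < x <= y -> z <= 0 -> Rpower y z <= Rpower x z.
Proof.
  intros Hxy Hz. unfold Rpower. apply exp_le_mono.
  pose proof (ln_le x y ltac:(lra) ltac:(lra)). nra.
Qed.

Lemma cont_cmul k (f : R -> R) t : continuous f t -> continuous (fun s => k * f s) t.
Proof. intro H. apply (cont_mult (fun _ => k) f). apply continuous_const. exact H. Qed.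

Section Interval.
Variables (u : R -> R) (M al c a h : R).
Hypothesis Hal : 0 < al < 1.
Hypothesis Hh : 0 < h.
Hypothesis Hc : a + h < c.
Hypothesis H1 : forall t, a <= t <= a + h -> ex_derive u t.
Hypothesis H2 : forall t, a <= t <= a + h -> ex_derive (Derive u) t.
Hypothesis HM : forall t, a <= t <= a + h -> Rabs (Derive (Derive u) t) <= M.

Let dl := (u (a + h) - u a) / h.

Lemma A_gen :
  Rabs (RInt (fun s => (Derive u s - dl) * Rpower (c - s) (- al)) a (a + h)) <=
  RInt (fun s => M / 2 * al * ((s - a) * (a + h - s) * Rpower (c - s) (- al - 1))) a (a + h).
Proof.
  destruct (ibp u a (a + h) c al dl ltac:(lra)) as [X1 [X2 E]]; auto.
  rewrite E. replace (u (a + h) - u a - dl * (a + h - a)) with 0 by (unfold dl; field; lra).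
  rewrite Rmult_0_l, Rminus_0_l, Rabs_Ropp.
  apply bound_RInt; auto. lra.
  apply ex_RInt_cont. lra. intros t Ht. apply (cont_cmul (M / 2 * al)).
  apply cont_mult. apply contR; auto_derive; auto. apply cont_rpc; lra.
  intros z Hz. rewrite Rabs_mult.
  rewrite (Rabs_pos_eq (al * _)) by (apply Rmult_le_pos; [lra | left; apply rp_pos]).
  pose proof (interp_err u a (a + h) M ltac:(lra) H1 H2 HM z Hz) as I.
  replace (a + h - a) with h in I by ring. fold dl in I.
  pose proof (rp_pos (c - z) (- al - 1)).
  apply Rle_trans with (M / 2 * (z - a) * (a + h - z) * (al * Rpower (c - z) (- al - 1))).
  apply Rmult_le_compat_r; [ apply Rmult_le_pos; lra | exact I].
  right; ring.
Qed.

Lemma M_nonneg : 0 <= M.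
Proof. pose proof (HM a ltac:(lra)). pose proof (Rabs_pos (Derive (Derive u) a)). lra. Qed.

Lemma A_crude :
  Rabs (RInt (fun s => (Derive u s - dl) * Rpower (c - s) (- al)) a (a + h)) <=
  M / 2 * al * Rpower (c - (a + h)) (- al - 1) * (h ^ 3 / 6).
Proof.
  eapply Rle_trans. apply A_gen.
  pose proof M_nonneg as HM0.
  assert (Hp : is_RInt (fun s => M / 2 * al * Rpower (c - (a + h)) (- al - 1) * ((s - a) * (a + h - s))) a (a + h)
                (M / 2 * al * Rpower (c - (a + h)) (- al - 1) * (h ^ 3 / 6))).
  { pose proof (is_RInt_scal _ _ _ (M / 2 * al * Rpower (c - (a + h)) (- al - 1)) _ (int_p a (a + h))) as P.
    replace (a + h - a) with h in P by ring. exact P. }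
  rewrite <- (RInt_uniq _ _ _ _ Hp).
  apply RInt_le. lra.
  apply ex_RInt_cont. lra. intros t Ht. apply (cont_cmul (M / 2 * al)).
  apply cont_mult. apply contR; auto_derive; auto. apply cont_rpc; lra.
  eexists; exact Hp.
  intros x Hx.
  pose proof (rp_anti (c - (a + h)) (c - x) (- al - 1) ltac:(lra) ltac:(lra)).
  assert (0 <= (x - a) * (a + h - x)) by (apply Rmult_le_pos; lra).
  assert (0 <= M / 2 * al) by (apply Rmult_le_pos; lra).
  replace (M / 2 * al * ((x - a) * (a + h - x) * Rpower (c - x) (- al - 1))) with
    (M / 2 * al * ((x - a) * (a + h - x)) * Rpower (c - x) (- al - 1)) by ring.
  replace (M / 2 * al * Rpower (c - (a + h)) (- al - 1) * ((x - a) * (a + h - x))) with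
    (M / 2 * al * ((x - a) * (a + h - x)) * Rpower (c - (a + h)) (- al - 1)) by ring.
  apply Rmult_le_compat_l; [ apply Rmult_le_pos | ]; lra.
Qed.

Lemma A_exact : c = a + 2 * h ->
  Rabs (RInt (fun s => (Derive u s - dl) * Rpower (c - s) (- al)) a (a + h)) <=
  M / 2 * (h * h * Rpower h (- al) * T2 al / (1 - al)).
Proof.
  intro Ec.
  eapply Rle_trans. apply A_gen.
  pose proof (is_RInt_scal _ _ _ (M / 2 * al) _ (int_T2 a h al Hh Hal)) as P.
  rewrite <- Ec in P.
  assert (P' : is_RInt (fun s => M / 2 * al * ((s - a) * (a + h - s) * Rpower (c - s) (- al - 1))) a (a + h)
     (M / 2 * al * (h * h * Rpower h (- al) * T2 al / (al * (1 - al))))) by exact P.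
  right. rewrite (RInt_uniq _ _ _ _ P'). field. lra.
Qed.

End Interval.

Lemma tele al x h : 0 < al < 1 -> 0 < h -> h < x ->
  h * Rpower x (- al - 1) <= (Rpower (x - h) (- al) - Rpower x (- al)) / al.
Proof.
  intros Ha Hh Hx.
  destruct (MVT_gen (fun y => Rpower y (- al)) (x - h) x (fun y => - al * Rpower y (- al - 1))) as [xi [Hxi E]].
  { intros y Hy. rewrite Rmin_left, Rmax_right in Hy by lra. apply der_rp1. lra. }
  { intros y Hy. rewrite Rmin_left, Rmax_right in Hy by lra. eapply cont_of_der. apply der_rp1. lra. }
  rewrite Rmin_left, Rmax_right in Hxi by lra.
  pose proof (rp_anti xi x (- al - 1) ltac:(lra) ltac:(lra)).
  replace (x - (x - h)) with h in E by ring.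
  apply Rmult_le_reg_r with al. lra.
  replace ((Rpower (x - h) (- al) - Rpower x (- al)) / al * al) with (Rpower (x - h) (- al) - Rpower x (- al)) by (field; lra).
  replace (Rpower (x - h) (- al) - Rpower x (- al)) with (al * Rpower xi (- al - 1) * h) by lra. replace (h * Rpower x (- al - 1) * al) with ((al * h) * Rpower x (- al - 1)) by ring. replace (al * Rpower xi (- al - 1) * h) with ((al * h) * Rpower xi (- al - 1)) by ring. apply Rmult_le_compat_l; [nra | lra].
Qed.

Fixpoint sm (f : nat -> R) (m : nat) : R :=
  match m with O => 0 | S p => sm f p + f p end.

Lemma sm_S f m : sm f (S m) = sm f m + f m.
Proof. reflexivity. Qed.

Lemma sm_ext f g m : (forall k, (k < m)%nat -> f k = g k) -> sm f m = sm g m.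
Proof. induction m; simpl; intros H; auto. rewrite IHm, H; auto. Qed.

Lemma sm_scal c f m : sm (fun k => c * f k) m = c * sm f m.
Proof. induction m; simpl. ring. rewrite IHm. ring. Qed.

Lemma sm_plus f g m : sm (fun k => f k + g k) m = sm f m + sm g m.
Proof. induction m; simpl. ring. rewrite IHm. ring. Qed.

Lemma sm_minus f g m : sm (fun k => f k - g k) m = sm f m - sm g m.
Proof. induction m; simpl. ring. rewrite IHm. ring. Qed.

Lemma sm_abs f g m : (forall k, (k < m)%nat -> Rabs (f k) <= g k) -> Rabs (sm f m) <= sm g m.
Proof.
  induction m; simpl; intros H. rewrite Rabs_R0; lra.
  eapply Rle_trans. apply Rabs_triang. apply Rplus_le_compat. apply IHm; auto. apply H; auto.
Qed.

Lemma sm_const c m : sm (fun _ => c) m = INR m * c.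
Proof. induction m; simpl sm. simpl; ring. rewrite IHm, S_INR. ring. Qed.

Lemma sm_tele g m : sm (fun k => g (S k) - g k) m = g m - g O.
Proof. induction m; simpl. ring. rewrite IHm. ring. Qed.

Lemma sm_le f g m : (forall k, (k < m)%nat -> f k <= g k) -> sm f m <= sm g m.
Proof. induction m; simpl; intros H. lra. apply Rplus_le_compat. apply IHm; auto. apply H; auto. Qed.

Lemma sum_sm (F : nat -> nat -> R) NA m :
  sum_n_m (fun i => sm (F i) m) 1 NA = sm (fun k => sum_n_m (fun i => F i k) 1 NA) m.
Proof.
  induction m; simpl.
  - exact (sum_n_m_const_zero (G:=R_AbelianMonoid) 1 NA).
  - rewrite <- IHm. exact (sum_n_m_plus (G:=R_AbelianMonoid) (fun i => sm (F i) m) (fun i => F i m) 1 NA).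
Qed.

Lemma psi_closed si h U p :
  fidr_psi si h U (S p) = sm (fun k => (U (S k) - U k) * exp (- (si * ((INR (S p) - INR (S k)) * h)))
                                        * (1 - exp (- (si * h))) / (si * h)) p.
Proof.
  induction p.
  - reflexivity.
  - change (fidr_psi si h U (S (S p))) with
      (exp (- (si * h)) * fidr_psi si h U (S p)
       + (U (S p) - U p) * (1 - exp (- (si * h))) * exp (- (si * h)) / (si * h)).
    rewrite IHp. rewrite sm_S. f_equal.
    + rewrite <- sm_scal. apply sm_ext. intros k Hk.
      replace (- (si * ((INR (S (S p)) - INR (S k)) * h))) with (- (si * h) + - (si * ((INR (S p) - INR (S k)) * h)))
        by (rewrite !S_INR; ring).
      rewrite exp_plus. unfold Rdiv. ring.
    + replace (- (si * ((INR (S (S p)) - INR (S p)) * h))) with (- (si * h)) by (rewrite !S_INR; ring).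
      unfold Rdiv. ring.
Qed.

Lemma is_RInt_sum (f : nat -> R -> R) (I : nat -> R) a b NA :
  (forall i, (1 <= i <= NA)%nat -> is_RInt (f i) a b (I i)) ->
  is_RInt (fun x => sum_n_m (fun i => f i x) 1 NA) a b (sum_n_m I 1 NA).
Proof.
  induction NA; intros H.
  - pose proof (is_RInt_const (V:=R_NormedModule) a b 0) as H0.
    change (scal (b - a) 0) with ((b - a) * 0) in H0. rewrite Rmult_0_r in H0.
    rewrite sum_n_m_zero by lia.
    eapply is_RInt_ext; [ | exact H0].
    intros x _. rewrite sum_n_m_zero by lia. reflexivity.
  - rewrite sum_n_Sm by lia.
    eapply is_RInt_ext; [ | apply (is_RInt_plus (V:=R_NormedModule)); [apply IHNA | apply H]].
    intros x _. rewrite sum_n_Sm by lia. reflexivity.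
    intros i Hi; apply H; lia. lia.
Qed.

Lemma T2_nonneg al : 0 < al < 1 -> 0 <= T2 al.
Proof.
  intro Ha. pose proof (int_T2 0 1 al Rlt_0_1 Ha) as P.
  assert (V : 0 <= 1 * 1 * Rpower 1 (- al) * T2 al / (al * (1 - al))).
  { rewrite <- (RInt_uniq _ _ _ _ P). apply RInt_ge_0. lra. eexists; exact P.
    intros x Hx. apply Rmult_le_pos. apply Rmult_le_pos; lra. left; apply rp_pos. }
  pose proof (rp_pos 1 (- al)).
  assert (0 < al * (1 - al)) by nra.
  destruct (Rle_or_lt 0 (T2 al)) as [h|h]; auto.
  assert (1 * 1 * Rpower 1 (- al) * T2 al / (al * (1 - al)) < 0).
  { unfold Rdiv. apply Rmult_neg_pos. nra. apply Rinv_0_lt_compat; auto. }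
  lra.
Qed.

Section Hist.
Variables (u : R -> R) (al h eps0 M2 M1 T : R) (n NA : nat) (s w : nat -> R).
Hypothesis Hal : 0 < al < 1.
Hypothesis Hh : 0 < h.
Hypothesis Hn : (1 <= n)%nat.
Hypothesis HcT : INR n * h <= T.
Hypothesis Hu1 : forall t, 0 <= t <= INR n * h -> ex_derive u t.
Hypothesis Hu2 : forall t, 0 <= t <= INR n * h -> ex_derive (Derive u) t.
Hypothesis HM2 : forall t, 0 <= t <= INR n * h -> Rabs (Derive (Derive u) t) <= M2.
Hypothesis HM1 : forall t, 0 <= t <= INR (n - 1) * h -> Rabs (Derive u t) <= M1.
Hypothesis Hs : forall i, (1 <= i <= NA)%nat -> 0 < s i.
Hypothesis Happ : forall t, h <= t <= T ->
  Rabs (Rpower t (- al) - sum_n_m (fun i => w i * exp (- (s i * t))) 1 NA) <= eps0.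

Definition tk k := INR k * h.
Definition U k := u (tk k).
Definition dk k := (U (S k) - U k) / h.
Definition cc := INR n * h.
Definition Kf x := Rpower (cc - x) (- al).
Definition Kap x := sum_n_m (fun i => w i * exp (- (s i * (cc - x)))) 1 NA.
Definition KA k := sum_n_m (fun i => w i * (exp (- (s i * (cc - tk (S k)))) - exp (- (s i * (cc - tk k)))) / s i) 1 NA.
Definition Ak k := RInt (fun x => (Derive u x - dk k) * Kf x) (tk k) (tk (S k)).

Lemma tkS k : tk (S k) = tk k + h.
Proof. unfold tk. rewrite S_INR. ring. Qed.

Lemma tk_bnd k : (k <= n - 1)%nat -> 0 <= tk k <= cc - h.
Proof.
  intro Hk. unfold tk, cc. split. apply Rmult_le_pos; [apply pos_INR | lra].
  assert (INR k <= INR n - 1).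
  { apply le_INR in Hk. rewrite minus_INR in Hk by lia. simpl (INR 1) in Hk. lra. }
  nra.
Qed.

Lemma cont_uK x : 0 <= x < cc -> continuous (fun y => Derive u y * Kf y) x.
Proof.
  intro Hx. apply cont_mult. apply contR. apply Hu2. unfold cc in Hx; lra.
  unfold Kf. apply cont_rpc. lra.
Qed.

Lemma hist_split m : (m <= n - 1)%nat ->
  RInt (fun y => Derive u y * Kf y) 0 (tk m) = sm (fun k => RInt (fun y => Derive u y * Kf y) (tk k) (tk (S k))) m.
Proof.
  induction m; intros Hm.
  - unfold tk. simpl. rewrite Rmult_0_l. apply (RInt_point (V:=R_CompleteNormedModule)).
  - rewrite sm_S, <- IHm by lia.
    pose proof (tk_bnd m ltac:(lia)). pose proof (tk_bnd (S m) Hm). rewrite tkS in *.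
    symmetry. apply (RInt_Chasles (V:=R_CompleteNormedModule)).
    apply ex_RInt_cont. lra. intros t Ht. apply cont_uK. lra.
    apply ex_RInt_cont. lra. intros t Ht. apply cont_uK. lra.
Qed.

Lemma int_split k : (k < n - 1)%nat ->
  RInt (fun y => Derive u y * Kf y) (tk k) (tk (S k)) = Ak k + dk k * RInt Kf (tk k) (tk (S k)).
Proof.
  intro Hk. pose proof (tk_bnd k ltac:(lia)). pose proof (tk_bnd (S k) ltac:(lia)). rewrite tkS in *.
  unfold Ak. rewrite tkS.
  assert (X1 : ex_RInt (fun x => (Derive u x - dk k) * Kf x) (tk k) (tk k + h)).
  { apply ex_RInt_cont. lra. intros t Ht. apply cont_mult.
    apply (continuous_minus (Derive u) (fun _ => dk k)). apply contR, Hu2. unfold cc in *; lra.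
    apply continuous_const. unfold Kf; apply cont_rpc; lra. }
  assert (X2 : ex_RInt Kf (tk k) (tk k + h)).
  { apply ex_RInt_cont. lra. intros t Ht. unfold Kf; apply cont_rpc; lra. }
  pose proof (is_RInt_plus _ _ _ _ _ _ (RInt_corr _ _ _ X1) (is_RInt_scal _ _ _ (dk k) _ (RInt_corr _ _ _ X2))) as P.
  apply RInt_uniq. eapply is_RInt_ext; [ | exact P].
  intros x _. unfold plus, scal; simpl. unfold mult; simpl. ring.
Qed.

Lemma psi_sum :
  sum_n_m (fun i => w i * fidr_psi (s i) h U n) 1 NA = sm (fun k => dk k * KA k) (n - 1).
Proof.
  destruct n as [|p] eqn:En; [lia | ]. replace (S p - 1)%nat with p by lia.
  rewrite (sum_n_m_ext_loc _ (fun i => sm (fun k => w i * ((U (S k) - U k) * exp (- (s i * ((INR (S p) - INR (S k)) * h)))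
                                        * (1 - exp (- (s i * h))) / (s i * h))) p)).
  2: { intros i Hi. rewrite psi_closed. rewrite <- sm_scal. reflexivity. }
  rewrite sum_sm. apply sm_ext. intros k Hk.
  unfold KA. rewrite <- (sum_n_m_mult_l (K:=R_AbsRing)).
  apply sum_n_m_ext_loc. intros i Hi. pose proof (Hs i ltac:(lia)) as Hsi.
  unfold mult; cbn -[INR exp Rpower]. unfold dk, cc, tk. rewrite En.
  replace (exp (- (s i * (INR (S p) * h - INR k * h)))) with
     (exp (- (s i * (INR (S p) * h - INR (S k) * h))) * exp (- (s i * h))).
  2: { rewrite <- exp_plus. apply f_equal. rewrite (S_INR k). ring. }
  replace (- (s i * ((INR (S p) - INR (S k)) * h))) with (- (s i * (INR (S p) * h - INR (S k) * h))) by ring.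
  field. lra.
Qed.

Lemma KA_err k : (k < n - 1)%nat -> Rabs (RInt Kf (tk k) (tk (S k)) - KA k) <= eps0 * h.
Proof.
  intro Hk. pose proof (tk_bnd k ltac:(lia)). pose proof (tk_bnd (S k) ltac:(lia)). rewrite tkS in *.
  assert (X2 : ex_RInt Kf (tk k) (tk k + h)).
  { apply ex_RInt_cont. lra. intros t Ht. unfold Kf; apply cont_rpc; lra. }
  assert (P1 : is_RInt Kap (tk k) (tk k + h) (KA k)).
  { unfold Kap, KA. rewrite <- tkS. apply is_RInt_sum. intros i Hi. apply int_exp. apply Hs; auto. }
  pose proof (is_RInt_minus _ _ _ _ _ _ (RInt_corr _ _ _ X2) P1) as P.
  idtac.
  replace (RInt Kf (tk k) (tk k + h) - KA k) with (RInt (fun x => Kf x - Kap x) (tk k) (tk k + h)).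
  2: { apply RInt_uniq. eapply is_RInt_ext; [ | exact P]. intros; reflexivity. }
  eapply Rle_trans. apply (bound_RInt _ (fun _ => eps0)). lra. eexists; exact P.
  apply ex_RInt_const.
  intros z Hz. unfold Kf, Kap. apply Happ. unfold cc in *. split. lra.
  assert (0 <= tk k) by lra. lra.
  rewrite RInt_const. rewrite scalR. right. ring.
Qed.

Lemma dk_bnd k : (k < n - 1)%nat -> Rabs (dk k) <= M1.
Proof.
  intro Hk. pose proof (tk_bnd k ltac:(lia)). pose proof (tk_bnd (S k) ltac:(lia)).
  assert (Hk1 : tk (S k) <= tk (n - 1)).
  { unfold tk. apply Rmult_le_compat_r. lra. apply le_INR. lia. }
  rewrite tkS in *.
  destruct (MVT_gen u (tk k) (tk k + h) (Derive u)) as [xi [Hxi E]].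
  { intros x Hx. rewrite Rmin_left, Rmax_right in Hx by lra. apply Derive_correct. apply Hu1. unfold cc in *; lra. }
  { intros x Hx. rewrite Rmin_left, Rmax_right in Hx by lra. eapply cont_of_der. apply Derive_correct. apply Hu1. unfold cc in *; lra. }
  rewrite Rmin_left, Rmax_right in Hxi by lra.
  unfold dk, U. rewrite tkS, E. replace (Derive u xi * (tk k + h - tk k) / h) with (Derive u xi) by (field; lra).
  apply HM1. unfold tk in *. lra.
Qed.

Lemma A_sum : Rabs (sm Ak (n - 1)) <=
  M2 * (h * h * Rpower h (- al) / 12) + M2 / 2 * (h * h * Rpower h (- al) * T2 al / (1 - al)).
Proof.
  assert (HM0 : 0 <= M2).
  { pose proof (HM2 0 ltac:(split; [lra | apply Rmult_le_pos; [apply pos_INR | lra]])).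
    pose proof (Rabs_pos (Derive (Derive u) 0)). lra. }
  pose proof (T2_nonneg al Hal) as HT2. pose proof (rp_pos h (- al)) as HQ.
  assert (HQ2 : 0 <= M2 * (h * h * Rpower h (- al) / 12)).
  { apply Rmult_le_pos; auto. apply Rmult_le_pos; [ | lra]. apply Rmult_le_pos; nra. }
  assert (HQ3 : 0 <= M2 / 2 * (h * h * Rpower h (- al) * T2 al / (1 - al))).
  { apply Rmult_le_pos; [lra | ]. unfold Rdiv. apply Rmult_le_pos; [ | left; apply Rinv_0_lt_compat; lra].
    apply Rmult_le_pos; auto. apply Rmult_le_pos; nra. }
  destruct (n - 1)%nat as [|p] eqn:Em.
  { simpl. rewrite Rabs_R0. lra. }
  assert (En : n = S (S p)) by lia.
  assert (Hcc : cc = tk p + 2 * h) by (unfold cc, tk; rewrite En, !S_INR; ring).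
  assert (Hbnd : forall k, (k <= S p)%nat -> 0 <= tk k /\ tk k + h <= cc).
  { intros k Hk. pose proof (tk_bnd k ltac:(lia)). lra. }
  rewrite sm_S. eapply Rle_trans. apply Rabs_triang. apply Rplus_le_compat.
  - apply Rle_trans with (sm (fun k => M2 * (h * h / 12) * (Rpower (cc - tk (S (S k))) (- al) - Rpower (cc - tk (S k)) (- al))) p).
    + apply sm_abs. intros k Hk.
      destruct (Hbnd k ltac:(lia)) as [B1 B2]. destruct (Hbnd (S k) ltac:(lia)) as [B3 B4].
      rewrite tkS in B3, B4.
      assert (Hx : 2 * h <= cc - (tk k + h)).
      { assert (tk (S (S k)) <= tk (S p)) by (unfold tk; apply Rmult_le_compat_r; [lra | apply le_INR; lia]).
        rewrite !tkS in H. lra. }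
      unfold Ak, dk, U. rewrite tkS.
      eapply Rle_trans. eapply (A_crude u M2 al cc (tk k) h); auto; try lra.
      intros t Ht; apply Hu1; unfold cc in *; lra.
      intros t Ht; apply Hu2; unfold cc in *; lra.
      intros t Ht; apply HM2; unfold cc in *; lra.
      pose proof (tele al (cc - (tk k + h)) h Hal Hh ltac:(lra)) as Te.
      rewrite !tkS. replace (cc - (tk k + h) - h) with (cc - (tk k + h + h)) in Te by ring.
      apply Rle_trans with (M2 / 2 * al * (h * h / 6) * (h * Rpower (cc - (tk k + h)) (- al - 1))).
      apply Req_le. field.
      apply Rle_trans with (M2 / 2 * al * (h * h / 6) * ((Rpower (cc - (tk k + h + h)) (- al) - Rpower (cc - (tk k + h)) (- al)) / al)).
      apply Rmult_le_compat_l; auto. apply Rmult_le_pos; [ | nra]. apply Rmult_le_pos; lra.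
      right; field; lra.
    + rewrite sm_scal. rewrite (sm_tele (fun j => Rpower (cc - tk (S j)) (- al))).
      replace (M2 * (h * h * Rpower h (- al) / 12)) with (M2 * (h * h / 12) * Rpower h (- al)) by field.
      apply Rmult_le_compat_l. apply Rmult_le_pos; auto; nra.
      replace (cc - tk (S p)) with h by (rewrite Hcc, tkS; ring).
      pose proof (rp_pos (cc - tk 1) (- al)). lra.
  - unfold Ak, dk, U. rewrite tkS.
    eapply Rle_trans. eapply (A_exact u M2 al cc (tk p) h); auto; try lra.
    intros t Ht; apply Hu1; destruct (Hbnd p ltac:(lia)); unfold cc in *; lra.
    intros t Ht; apply Hu2; destruct (Hbnd p ltac:(lia)); unfold cc in *; lra.
    intros t Ht; apply HM2; destruct (Hbnd p ltac:(lia)); unfold cc in *; lra.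
    lra.
Qed.

Lemma hist_bound :
  Rabs (RInt (fun y => Derive u y * Kf y) 0 (tk (n - 1)) - sum_n_m (fun i => w i * fidr_psi (s i) h U n) 1 NA)
  <= M2 * (h * h * Rpower h (- al) / 12) + M2 / 2 * (h * h * Rpower h (- al) * T2 al / (1 - al))
     + eps0 * (INR (n - 1) * h) * M1.
Proof.
  rewrite hist_split by lia. rewrite psi_sum.
  rewrite (sm_ext _ (fun k => Ak k + dk k * RInt Kf (tk k) (tk (S k)))) by (intros; apply int_split; auto).
  rewrite sm_plus.
  replace (sm Ak (n - 1) + sm (fun k => dk k * RInt Kf (tk k) (tk (S k))) (n - 1) - sm (fun k => dk k * KA k) (n - 1))
    with (sm Ak (n - 1) + sm (fun k => dk k * (RInt Kf (tk k) (tk (S k)) - KA k)) (n - 1)).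
  2: { rewrite <- Rplus_minus_assoc. f_equal. rewrite <- sm_minus. apply sm_ext. intros; ring. }
  eapply Rle_trans. apply Rabs_triang. apply Rplus_le_compat. apply A_sum.
  eapply Rle_trans. apply (sm_abs _ (fun _ => M1 * (eps0 * h))).
  intros k Hk. rewrite Rabs_mult. apply Rmult_le_compat; try apply Rabs_pos.
  apply dk_bnd; auto. apply KA_err; auto.
  rewrite sm_const. right; ring.
Qed.

End Hist.

Section Last.
Variables (u : R -> R) (al h M2 : R) (n : nat).
Hypothesis Hal : 0 < al < 1.
Hypothesis Hh : 0 < h.
Hypothesis Hn : (1 <= n)%nat.
Hypothesis Hu1 : forall t, 0 <= t <= INR n * h -> ex_derive u t.
Hypothesis Hu2 : forall t, 0 <= t <= INR n * h -> ex_derive (Derive u) t.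
Hypothesis HM2 : forall t, 0 <= t <= INR n * h -> Rabs (Derive (Derive u) t) <= M2.

Lemma last_interval :
  exists L, is_RInt_gen (fun y => Derive u y * Rpower (INR n * h - y) (- al)) (at_point (INR (n - 1) * h)) (at_left (INR n * h)) L
   /\ Rabs (L - (u (INR n * h) - u (INR (n - 1) * h)) * Rpower h (- al) / (1 - al))
      <= M2 / 2 * al * (h * h * Rpower h (- al) / ((1 - al) * (2 - al))).
Proof.
  set (a := INR (n - 1) * h).
  assert (Hca : INR n * h = a + h).
  { unfold a. rewrite minus_INR by lia. simpl (INR 1). ring. }
  rewrite Hca. set (c := a + h).
  assert (Ha0 : 0 <= a) by (unfold a; apply Rmult_le_pos; [apply pos_INR | lra]).
  assert (H1 : forall t, a <= t <= c -> ex_derive u t) by (intros; apply Hu1; rewrite Hca; unfold c in *; lra).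
  assert (H2 : forall t, a <= t <= c -> ex_derive (Derive u) t) by (intros; apply Hu2; rewrite Hca; unfold c in *; lra).
  assert (HM : forall t, a <= t <= c -> Rabs (Derive (Derive u) t) <= M2) by (intros; apply HM2; rewrite Hca; unfold c in *; lra).
  set (dl := (u c - u a) / h).
  set (e := fun s => u s - u a - dl * (s - a)).
  set (K := fun s => Rpower (c - s) (- al)).
  set (g2 := fun s => e s * (al * Rpower (c - s) (- al - 1))).
  set (gm := fun s => M2 / 2 * al * ((s - a) * Rpower (c - s) (- al))).
  set (J := fun b => RInt g2 a b).
  assert (HD : at_left c (fun b => a < b < c)).
  { exists (mkposreal h Hh). intros x Hx Hxc. change (Rabs (x - c) < h) in Hx.
    apply Rabs_def2 in Hx. unfold c in *. lra. }
  assert (Eerr : forall z, a <= z <= c -> Rabs (e z) <= M2 / 2 * (z - a) * (c - z)).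
  { intros z Hz. pose proof (interp_err u a c M2 ltac:(unfold c; lra) H1 H2 HM z Hz) as I.
    replace (c - a) with h in I by (unfold c; ring). exact I. }
  assert (Hpt : forall z, a <= z < c -> Rabs (g2 z) <= gm z).
  { intros z Hz. unfold g2, gm. rewrite Rabs_mult.
    rewrite (Rabs_pos_eq (al * _)) by (apply Rmult_le_pos; [lra | left; apply rp_pos]).
    destruct (pw (c - z) al ltac:(lra)) as [A1 _]. rewrite A1.
    pose proof (Eerr z ltac:(lra)). pose proof (rp_pos (c - z) (- al - 1)).
    apply Rle_trans with (M2 / 2 * (z - a) * (c - z) * (al * Rpower (c - z) (- al - 1))).
    apply Rmult_le_compat_r; [ apply Rmult_le_pos; lra | auto]. right; ring. }
  assert (Xg2 : forall b, a <= b < c -> ex_RInt g2 a b).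
  { intros b Hb. destruct (ibp u a b c al dl Hb) as [_ [X _]]; auto.
    intros; apply H1; lra. intros; apply H2; lra. }
  assert (Igm : forall b, a <= b < c -> is_RInt gm a b (M2 / 2 * al * (Hm a h al b - Hm a h al a))).
  { intros b Hb. pose proof (is_RInt_scal _ _ _ (M2 / 2 * al) _ (int_last a h al b Hh Hal Hb)) as P. exact P. }
  destruct (ex_lim_cmp (at_left c) (at_left_proper_filter c) J (fun b => RInt gm a b) (fun b => a < b < c) HD)
    with (lg := M2 / 2 * al * (0 - Hm a h al a)) as [Jl HJl].
  { intros x y Hx Hy. unfold J. apply cmp_RInt; try apply Xg2; try lra.
    eexists; apply Igm; lra. eexists; apply Igm; lra.
    intros z Hz. apply Hpt. assert (a < Rmin x y) by (apply Rmin_glb_lt; lra).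
    assert (Rmax x y < c) by (apply Rmax_lub_lt; lra). lra. }
  { apply lim_ext with (fun b => M2 / 2 * al * (Hm a h al b + - Hm a h al a)).
    - apply filter_imp with (fun b => a < b < c); auto. intros b Hb. symmetry.
      rewrite (RInt_uniq _ _ _ _ (Igm b ltac:(lra))). ring.
    - apply lim_scal. replace (0 - Hm a h al a) with (0 + - Hm a h al a) by ring.
      apply lim_plus; [ | apply lim_const]. unfold Hm.
      replace 0 with (- h / (1 - al) * 0 + / (2 - al) * 0) by ring.
      apply lim_ext with (fun b => - h / (1 - al) * Rpower (a + h - b) (1 - al) + / (2 - al) * Rpower (a + h - b) (2 - al)).
      apply filter_forall; intro b; field; lra.
      apply lim_plus; apply lim_scal; apply rp_limL; lra. }
  assert (B : Rabs Jl <= M2 / 2 * al * (h * h * Rpower h (- al) / ((1 - al) * (2 - al)))).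
  { assert (EvB : at_left c (fun b => Rabs (J b) <= M2 / 2 * al * (h * h * Rpower h (- al) / ((1 - al) * (2 - al))))).
    { apply filter_imp with (fun b => a < b < c); auto. intros b Hb. unfold J.
      eapply Rle_trans. apply bound_RInt. lra. apply Xg2; lra. eexists; apply Igm; lra.
      intros z Hz. apply Hpt; lra.
      rewrite (RInt_uniq _ _ _ _ (Igm b ltac:(lra))).
      destruct (Hm_facts a h al b Hh Hal ltac:(unfold c in Hb; lra)) as [F1 F2].
      assert (0 <= M2) by (pose proof (HM a ltac:(unfold c; lra)); pose proof (Rabs_pos (Derive (Derive u) a)); lra).
      rewrite <- F2. apply Rmult_le_compat_l. apply Rmult_le_pos; lra. lra. }
    apply Rabs_le. split.
    - assert (Hn' : filterlim (fun b => -1 * J b) (at_left c) (locally (-1 * Jl))) by (apply lim_scal; auto).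
      pose proof (lim_le2 (F := at_left c) (fun b => -1 * J b) (fun _ => M2 / 2 * al * (h * h * Rpower h (- al) / ((1 - al) * (2 - al))))
           (-1 * Jl) _ ltac:(apply filter_imp with (2 := EvB); intros b Hb; apply Rabs_le_between in Hb; lra) Hn' (lim_const _)).
      lra.
    - apply (lim_le2 (F := at_left c) J (fun _ => M2 / 2 * al * (h * h * Rpower h (- al) / ((1 - al) * (2 - al)))) Jl _); auto.
      apply filter_imp with (2 := EvB); intros b Hb; apply Rabs_le_between in Hb; lra. apply lim_const. }
  assert (EK : filterlim (fun b => e b * K b) (at_left c) (locally 0)).
  { apply lim_squeeze0 with (fun b => M2 / 2 * h * Rpower (c - b) (1 - al)).
    - apply filter_imp with (fun b => a < b < c); auto. intros b Hb. unfold K.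
      rewrite Rabs_mult, (Rabs_pos_eq (Rpower _ _)) by (left; apply rp_pos).
      pose proof (Eerr b ltac:(lra)). destruct (pw (c - b) al ltac:(lra)) as [A1 [A2 _]].
      rewrite A2, A1. pose proof (rp_pos (c - b) (- al - 1)).
      assert (0 <= M2) by (pose proof (HM a ltac:(unfold c; lra)); pose proof (Rabs_pos (Derive (Derive u) a)); lra).
      apply Rle_trans with (M2 / 2 * (b - a) * (c - b) * ((c - b) * Rpower (c - b) (- al - 1))).
      apply Rmult_le_compat_r; [ apply Rmult_le_pos; lra | auto].
      replace (M2 / 2 * h * ((c - b) * (c - b) * Rpower (c - b) (- al - 1))) with
         (M2 / 2 * h * (c - b) * ((c - b) * Rpower (c - b) (- al - 1))) by ring.
      apply Rmult_le_compat_r. apply Rmult_le_pos; lra.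
      apply Rmult_le_compat_r. lra. apply Rmult_le_compat_l. lra. unfold c in Hb; lra.
    - replace 0 with (M2 / 2 * h * 0) by ring. apply lim_scal. apply rp_limL. lra. }
  set (F := fun b => RInt (fun y => Derive u y * Rpower (c - y) (- al)) a b).
  assert (EF : forall b, a <= b < c ->
     @eq R (F b) ((e b * K b + -1 * J b) + (dl * Rpower h (1 - al) / (1 - al) + - (dl / (1 - al)) * Rpower (c - b) (1 - al)))).
  { intros b Hb.
    destruct (ibp u a b c al dl Hb) as [X1 [X2 E]]; auto. intros; apply H1; lra. intros; apply H2; lra.
    assert (X3 : ex_RInt (fun s => Rpower (c - s) (- al)) a b) by (eexists; apply int_K; auto).
    pose proof (is_RInt_plus _ _ _ _ _ _ (RInt_corr _ _ _ X1) (is_RInt_scal _ _ _ dl _ (int_K c al a b Hal Hb))) as P.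
    assert (Fv : @eq R (F b) (RInt (fun s => (Derive u s - dl) * Rpower (c - s) (- al)) a b
                      + dl * ((Rpower (c - a) (1 - al) - Rpower (c - b) (1 - al)) / (1 - al)))).
    { unfold F. apply RInt_uniq. eapply is_RInt_ext; [ | exact P]. intros x _. unfold plus, scal; simpl. unfold mult; simpl. ring. }
    rewrite Fv, E. unfold J, g2, e, K.
    replace (c - a) with h by (unfold c; ring). field. lra. }
  assert (LF : filterlim F (at_left c) (locally ((0 + -1 * Jl) + (dl * Rpower h (1 - al) / (1 - al) + - (dl / (1 - al)) * 0)))).
  { apply lim_ext with (fun b => (e b * K b + -1 * J b) + (dl * Rpower h (1 - al) / (1 - al) + - (dl / (1 - al)) * Rpower (c - b) (1 - al))).
    - apply filter_imp with (fun b => a < b < c); auto. intros b Hb. symmetry. apply EF. lra.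
    - apply lim_plus. apply lim_plus; auto. apply lim_scal; auto.
      apply lim_plus. apply lim_const. apply lim_scal. apply rp_limL. lra. }
  exists ((0 + -1 * Jl) + (dl * Rpower h (1 - al) / (1 - al) + - (dl / (1 - al)) * 0)). split.
  - apply (gen_of_lim (at_left c) _ _ a F); auto.
    apply filter_imp with (fun b => a < b < c); auto. intros b Hb. apply RInt_corr.
    apply ex_RInt_cont. lra. intros t Ht. apply cont_mult. apply contR. apply H2; lra. apply cont_rpc. lra.
  - destruct (pw h al Hh) as [A1 [A2 _]].
    replace ((0 + -1 * Jl) + (dl * Rpower h (1 - al) / (1 - al) + - (dl / (1 - al)) * 0)
             - (u c - u a) * Rpower h (- al) / (1 - al)) with (- Jl).
    rewrite Rabs_Ropp. exact B.
    unfold dl. rewrite A2, A1. field. lra.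
Qed.

End Last.

Theorem theorem7
  (alpha T eps0 : R) (NT NA n : nat) (s w : nat -> R) (u : R -> R)
  (M2 M1 : R)
  (Halpha : 0 < alpha < 1) (HT : 0 < T) (HNT : (1 <= NT)%nat)
  (Hs : forall i, (1 <= i <= NA)%nat -> 0 < s i)
  (Hw : forall i, (1 <= i <= NA)%nat -> 0 < w i)
  (Happrox : forall t, T / INR NT <= t <= T ->
     Rabs (Rpower t (- alpha)
           - sum_n_m (fun i => w i * exp (- (s i * t))) 1 NA) <= eps0)
  (Hn : (1 <= n <= NT)%nat)
  (* u in C^2[0, t_n] *)
  (Hu1 : forall t, 0 <= t <= INR n * (T / INR NT) -> ex_derive u t)
  (Hu2 : forall t, 0 <= t <= INR n * (T / INR NT) -> ex_derive (Derive u) t)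
  (Hu2c : forall t, 0 <= t <= INR n * (T / INR NT) ->
     filterlim (Derive_n u 2)
       (within (fun x => 0 <= x <= INR n * (T / INR NT)) (locally t))
       (locally (Derive_n u 2 t)))
  (* M2 = max_{0<=t<=t_n} |u''(t)|, M1 = max_{0<=t<=t_{n-1}} |u'(t)| *)
  (HM2 : is_max_on (fun t => Rabs (Derive_n u 2 t)) 0 (INR n * (T / INR NT)) M2)
  (HM1 : is_max_on (fun t => Rabs (Derive u t)) 0 (INR (n - 1) * (T / INR NT)) M1) :
  let dt := T / INR NT in
  let R_err := caputo alpha u (INR n * dt)
               - fidr alpha dt NA s w (fun k => u (INR k * dt)) n in
  Rabs R_err <=
    Rpower dt (2 - alpha) / Gamma (2 - alpha) *
      ((1 - alpha) / 12 + Rpower 2 (2 - alpha) / (2 - alpha)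
       - (1 + Rpower 2 (- alpha))) * M2
    + eps0 * (INR (n - 1) * dt) / Gamma (1 - alpha) * M1.
Proof.
  cbv zeta.
  set (h := T / INR NT) in *.
  assert (HNT' : 1 <= INR NT) by (apply (le_INR 1); lia).
  assert (Hh : 0 < h) by (unfold h; apply Rdiv_lt_0_compat; lra).
  assert (Hn1 : (1 <= n)%nat) by lia.
  assert (HcT : INR n * h <= T).
  { unfold h. assert (HnN : INR n <= INR NT) by (apply le_INR; lia). replace T with (INR NT * (T / INR NT)) at 2 by (field; lra).
    apply Rmult_le_compat_r. left; apply Rdiv_lt_0_compat; lra. lra. }
  destruct (Gamma_facts alpha Halpha) as [G1pos G2eq].
  destruct HM2 as [HM2a [t2 [Ht2 Et2]]]. destruct HM1 as [HM1a [t1 [Ht1 Et1]]].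
  assert (HM2' : forall t, 0 <= t <= INR n * h -> Rabs (Derive (Derive u) t) <= M2) by (intros t Ht; apply (HM2a t Ht)).
  assert (HM1' : forall t, 0 <= t <= INR (n - 1) * h -> Rabs (Derive u t) <= M1) by (intros t Ht; apply (HM1a t Ht)).
  assert (M2p : 0 <= M2) by (rewrite <- Et2; apply Rabs_pos).
  assert (M1p : 0 <= M1) by (rewrite <- Et1; apply Rabs_pos).
  pose proof (hist_bound u alpha h eps0 M2 M1 T n NA s w Halpha Hh Hn1 HcT Hu1 Hu2 HM2' HM1' Hs Happrox) as HB.
  destruct (last_interval u alpha h M2 n Halpha Hh Hn1 Hu1 Hu2 HM2') as [L [HL1 HL2]].
  set (a := INR (n - 1) * h).
  assert (Hca : INR n * h = a + h).
  { unfold a. rewrite minus_INR by lia. simpl (INR 1). ring. }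
  assert (Ha0 : 0 <= a) by (unfold a; apply Rmult_le_pos; [apply pos_INR | lra]).
  set (Ih := RInt (fun y => Derive u y * Kf alpha h n y) 0 (tk h (n - 1))).
  assert (XIh : is_RInt (fun y => Derive u y * Rpower (INR n * h - y) (- alpha)) 0 a Ih).
  { apply RInt_corr. apply ex_RInt_cont. lra. intros t Ht. apply cont_mult.
    apply contR. apply Hu2. lra. apply cont_rpc. lra. }
  assert (Ecap : caputo alpha u (INR n * h) = / Gamma (1 - alpha) * (Ih + L)).
  { unfold caputo. f_equal.
    apply is_RInt_gen_unique.
    replace (Ih + L) with (plus Ih L) by reflexivity.
    apply (@is_RInt_gen_Chasles R_NormedModule (at_point 0) (at_left (INR n * h)) _ _ _ a).
    apply is_RInt_gen_at_point. exact XIh. exact HL1. }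
  unfold fidr. rewrite Ecap.
  set (S := sum_n_m (fun i => w i * fidr_psi (s i) h (fun k => u (INR k * h)) n) 1 NA).
  change (sum_n_m (fun i => w i * fidr_psi (s i) h (U u h) n) 1 NA) with S in HB.
  change (RInt (fun y => Derive u y * Kf alpha h n y) 0 (tk h (n - 1))) with Ih in HB.
  set (Dn := u (INR n * h) - u (INR (n - 1) * h)).
  fold a in HL2. fold Dn in HL2.
  assert (HQ : Rpower h (- alpha) = / Rpower h alpha) by apply Rpower_Ropp.
  pose proof (rp_pos h alpha) as Hpa.
  assert (E : / Gamma (1 - alpha) * (Ih + L) - (Dn / (Rpower h alpha * Gamma (2 - alpha)) + / Gamma (1 - alpha) * S)
              = / Gamma (1 - alpha) * ((Ih - S) + (L - Dn * Rpower h (- alpha) / (1 - alpha)))).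
  { rewrite G2eq, HQ. field. repeat split; lra. }
  replace (u (INR n * h) - u (INR (n - 1) * h)) with Dn by reflexivity.
  rewrite E. rewrite Rabs_mult, Rabs_inv, (Rabs_pos_eq (Gamma (1 - alpha))) by lra.
  eapply Rle_trans.
  { apply Rmult_le_compat_l. left; apply Rinv_0_lt_compat; lra.
    eapply Rle_trans. apply Rabs_triang. apply Rplus_le_compat. exact HB. exact HL2. }
  destruct (pw h alpha Hh) as [A1 [A2 A3]]. destruct (pw 2 alpha ltac:(lra)) as [B1 [B2 B3]].
  rewrite G2eq. unfold T2. rewrite A3, B3, B1. fold a.
  rewrite A1. apply Req_le. field. repeat split; lra.
Qed.
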